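(* Assume the van Kampen setup below, with compatible future retracts $Q_k:\vec\pi_1(X_k)\to\vec\pi_1(X_k,B_k)$ and compatible future retracts $P_k:\vec\pi_1(X_k,B_k)\to\vec\pi_1(X_k,A_k)$ ($k=0,1,2$), each $P_k$ being left adjoint to the inclusion $\iota_k:\vec\pi_1(X_k,A_k)\to\vec\pi_1(X_k,B_k)$. Let $P:\vec\pi_1(X,B)\to\vec\pi_1(X,A)$ be the unique functor with $P\circ j_k=j'_k\circ P_k$ ($k=1,2$). Then $P$ is left adjoint to the inclusion $\iota:\vec\pi_1(X,A)\to\vec\pi_1(X,B)$, with unit given at $x\in B$ by the image of the unit of $P_k$ at $x$ (for any $k\in\{1,2\}$ with $x\in B_k$) and counit the identity; in particular $P$ is a future retract of $\vec\pi_1(X,B)$ onto $\vec\pi_1(X,A)$.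
   Context: A d-space is a topological space with a set of continuous paths $[0,1]\to X$ (dipaths) containing all constant paths, closed under precomposition with continuous non-decreasing maps $[0,1]\to[0,1]$ and under concatenation; subsets carry the dipaths with image in them. The fundamental category $\vec\pi_1(X)$ has objects the points of $X$ and morphisms $a\to b$ the classes of dipaths from $a$ to $b$ modulo the equivalence relation generated by endpoint-fixing directed homotopies; composition is concatenation. For $A\subseteq X$, $\vec\pi_1(X,A)$ is the full subcategory on objects in $A$. For $A\subseteq B\subseteq X$ with inclusion $\iota:\vec\pi_1(X,A)\to\vec\pi_1(X,B)$, a future retract is a functor $P:\vec\pi_1(X,B)\to\vec\pi_1(X,A)$ left adjoint to $\iota$ whose unit satisfies $\eta_a=\mathrm{id}_a$ for $a\in A$. Van Kampen setup: $X$ a d-space, $X_1,X_2\subseteq X$ with $X=\mathrm{Int}(X_1)\cup\mathrm{Int}(X_2)$, dipaths of $X$ the finite concatenations of dipaths of $X_1$ and $X_2$, $X_0=X_1\cap X_2$. For $k=0,1,2$, $A_k\subseteq B_k\subseteq X_k$ with $A_0=A_1\cap A_2$, $B_0=B_1\cap B_2$, $A=A_1\cup A_2$, $B=B_1\cup B_2$, $A=\mathrm{Int}_A(A_1)\cup\mathrm{Int}_A(A_2)$, $B=\mathrm{Int}_B(B_1)\cup\mathrm{Int}_B(B_2)$. Inclusion-induced functors: $i_k:\vec\pi_1(X_0,B_0)\to\vec\pi_1(X_k,B_k)$, $j_k:\vec\pi_1(X_k,B_k)\to\vec\pi_1(X,B)$, $i'_k:\vec\pi_1(X_0,A_0)\to\vec\pi_1(X_k,A_k)$,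 $j'_k:\vec\pi_1(X_k,A_k)\to\vec\pi_1(X,A)$ ($k=1,2$). Compatible future retracts $Q_k:\vec\pi_1(X_k)\to\vec\pi_1(X_k,B_k)$: each a future retract with unit $\theta^k$, commuting with the inclusion-induced functors from index $0$ to $k=1,2$, with $\theta^0_x$ mapping to $\theta^k_x$ for $x\in X_0$. Compatible future retracts $P_k:\vec\pi_1(X_k,B_k)\to\vec\pi_1(X_k,A_k)$: each a future retract with unit $\eta^k$, $P_k\circ i_k=i'_k\circ P_0$ ($k=1,2$), and $\eta^0_x$ mapping to $\eta^k_x$ for $x\in B_0$. *)

(* Defs.v *)
From Stdlib Require Import Reals Lra Relations.
From Stdlib Require Import ProofIrrelevance IndefiniteDescription.
Set Implicit Arguments.
Open Scope R_scope.

Definition I := {t : R | 0 <= t <= 1}.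
Definition val (t : I) : R := proj1_sig t.

Lemma I_ext (s t : I) : val s = val t -> s = t.
Proof. destruct s, t; unfold val; simpl; intros ->; f_equal; apply proof_irrelevance. Qed.

Lemma clamp_in (r : R) : 0 <= Rmin 1 (Rmax 0 r) <= 1.
Proof. unfold Rmin, Rmax; repeat destruct Rle_dec; lra. Qed.

Definition mkI (r : R) : I := exist _ (Rmin 1 (Rmax 0 r)) (clamp_in r).

Lemma I0_pf : 0 <= 0 <= 1. Proof. lra. Qed.
Lemma I1_pf : 0 <= 1 <= 1. Proof. lra. Qed.
Definition I0 : I := exist _ 0 I0_pf.
Definition I1 : I := exist _ 1 I1_pf.

Definition continuousII (phi : I -> I) : Prop :=
  forall t eps, eps > 0 -> exists del, del > 0 /\
    forall t', Rabs (val t' - val t) < del -> Rabs (val (phi t') - val (phi t)) < eps.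
Definition nondecreasing (phi : I -> I) : Prop :=
  forall s t, val s <= val t -> val (phi s) <= val (phi t).

Definition concat {T : Type} (g d : I -> T) : I -> T := fun t =>
  match Rle_dec (val t) (1/2) with
  | left _ => g (mkI (2 * val t))
  | right _ => d (mkI (2 * val t - 1))
  end.

Definition piece {T : Type} (g : I -> T) (s t : R) : I -> T :=
  fun u => g (mkI (s + (t - s) * val u)).

Definition continuousI {T : Type} (isOpen : (T -> Prop) -> Prop) (g : I -> T) : Prop :=
  forall U, isOpen U -> forall t, U (g t) ->
    exists eps, eps > 0 /\ forall t', Rabs (val t' - val t) < eps -> U (g t').

Record dspace := {
  pt : Type;
  isOpen : (pt -> Prop) -> Prop;
  open_full : isOpen (fun _ => True);
  open_inter : forall U V, isOpen U -> isOpen V -> isOpen (fun x => U x /\ V x);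
  open_union : forall F : (pt -> Prop) -> Prop, (forall U, F U -> isOpen U) ->
                 isOpen (fun x => exists U, F U /\ U x);
  dpath : (I -> pt) -> Prop;
  dpath_cont : forall g, dpath g -> continuousI isOpen g;
  dpath_const : forall x, dpath (fun _ => x);
  dpath_reparam : forall g phi, dpath g -> continuousII phi -> nondecreasing phi ->
                    dpath (fun t => g (phi t));
  dpath_concat : forall g d, dpath g -> dpath d -> g I1 = d I0 -> dpath (concat g d)
}.

Section FC.
Variable D : dspace.

Definition Int (U : pt D -> Prop) (x : pt D) : Prop :=
  exists V, isOpen D V /\ V x /\ forall y, V y -> U y.
Definition IntRel (W U : pt D -> Prop) (x : pt D) : Prop :=
  W x /\ U x /\ exists V, isOpen D V /\ V x /\ forall y, W y -> V y -> U y.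

Definition dpathS (S : pt D -> Prop) (g : I -> pt D) : Prop :=
  dpath D g /\ forall t, S (g t).

(* endpoint-fixing directed homotopy in S from g to d: a d-map
   (up-I) x (up-I) -> S, i.e. jointly continuous and sending pairs of
   continuous non-decreasing reparametrizations to dipaths *)
Definition dihom (S : pt D -> Prop) (g d : I -> pt D) : Prop :=
  exists H : I -> I -> pt D,
    (forall U, isOpen D U -> forall t s, U (H t s) ->
       exists eps, eps > 0 /\ forall t' s', Rabs (val t' - val t) < eps ->
         Rabs (val s' - val s) < eps -> U (H t' s')) /\
    (forall u v : I -> I, continuousII u -> nondecreasing u ->
       continuousII v -> nondecreasing v -> dpath D (fun r => H (u r) (v r))) /\
    (forall t s, S (H t s)) /\
    (forall t, H t I0 = g t) /\ (forall t, H t I1 = d t) /\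
    (forall s, H I0 s = g I0) /\ (forall s, H I1 s = g I1).

Definition equivS (S : pt D -> Prop) : relation (I -> pt D) :=
  clos_refl_sym_trans _ (dihom S).

Definition Hom (S : pt D -> Prop) (a b : pt D) : Type :=
  {C : (I -> pt D) -> Prop | exists g, dpathS S g /\ g I0 = a /\ g I1 = b /\ C = equivS S g}.

Definition Ob (S A : pt D -> Prop) : Type := {x : pt D | S x /\ A x}.
Definition ov {S A : pt D -> Prop} (x : Ob S A) : pt D := proj1_sig x.
Definition ovS {S A : pt D -> Prop} (x : Ob S A) : S (ov x) := proj1 (proj2_sig x).

Definition idm (S : pt D -> Prop) (x : pt D) (hx : S x) : Hom S x x.
Proof.
  refine (exist _ (equivS S (fun _ => x)) _).
  exists (fun _ => x). split; [split; [apply dpath_const | intros; exact hx] |].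
  repeat split.
Defined.

Lemma concat_I0 {T : Type} (g d : I -> T) : concat g d I0 = g I0.
Proof.
  unfold concat; simpl. destruct Rle_dec as [h|h]; [|unfold val in h; simpl in h; lra].
  f_equal; apply I_ext; unfold val; simpl.
  unfold Rmin, Rmax; repeat destruct Rle_dec; lra.
Qed.

Lemma concat_I1 {T : Type} (g d : I -> T) : concat g d I1 = d I1.
Proof.
  unfold concat; simpl. destruct Rle_dec as [h|h]; [unfold val in h; simpl in h; lra|].
  f_equal; apply I_ext; unfold val; simpl.
  unfold Rmin, Rmax; repeat destruct Rle_dec; lra.
Qed.

Definition comp (S : pt D -> Prop) {a b c : pt D} (f : Hom S a b) (h : Hom S b c) : Hom S a c.
Proof.
  destruct (constructive_indefinite_description _ (proj2_sig f)) as [g [[g1 g2] [ga [gb _]]]].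
  destruct (constructive_indefinite_description _ (proj2_sig h)) as [d [[d1 d2] [db [dc _]]]].
  refine (exist _ (equivS S (concat g d)) _).
  exists (concat g d). split; [split|].
  - apply dpath_concat; auto. congruence.
  - intro t; unfold concat; destruct Rle_dec; auto.
  - rewrite concat_I0, concat_I1. auto.
Defined.

End FC.

Arguments Hom {D}.
Arguments Ob {D}.
Arguments idm {D S x}.
Arguments comp {D S a b c}.
Arguments ov {D S A}.
Arguments ovS {D S A}.
Arguments dpathS {D}.
Arguments Int {D}.
Arguments IntRel {D}.

Record functor (D : dspace) (S A S' A' : pt D -> Prop) := {
  fo : Ob S A -> Ob S' A';
  fm : forall a b : Ob S A, Hom S (ov a) (ov b) -> Hom S' (ov (fo a)) (ov (fo b));
  fm_id : forall a, fm a a (idm (ovS a)) = idm (ovS (fo a));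
  fm_comp : forall a b c (f : Hom S (ov a) (ov b)) (g : Hom S (ov b) (ov c)),
      fm a c (comp f g) = comp (fm a b f) (fm b c g)
}.
Arguments fo {D S A S' A'}.
Arguments functor {D}.
Arguments fm {D S A S' A'} _ {a b}.

Definition IsIncl {D : dspace} {S A S' A' : pt D -> Prop} (F : functor S A S' A') : Prop :=
  (forall x, ov (fo F x) = ov x) /\
  (forall a b (f : Hom S (ov a) (ov b)) g, proj1_sig f g -> proj1_sig (fm F f) g).

Definition FunEqC {D : dspace} {S1 A1 S2 A2 S3 A3 S4 A4 : pt D -> Prop}
  (F1 : functor S1 A1 S2 A2) (F2 : functor S2 A2 S4 A4)
  (G1 : functor S1 A1 S3 A3) (G2 : functor S3 A3 S4 A4) : Prop :=
  (forall x, ov (fo F2 (fo F1 x)) = ov (fo G2 (fo G1 x))) /\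
  (forall a b (f : Hom S1 (ov a) (ov b)),
      proj1_sig (fm F2 (fm F1 f)) = proj1_sig (fm G2 (fm G1 f))).

Definition Adjunction {D : dspace} {S A S' A' : pt D -> Prop}
  (L : functor S A S' A') (R : functor S' A' S A)
  (eta : forall c : Ob S A, Hom S (ov c) (ov (fo R (fo L c))))
  (eps : forall d : Ob S' A', Hom S' (ov (fo L (fo R d))) (ov d)) : Prop :=
  (forall c c' (f : Hom S (ov c) (ov c')), comp f (eta c') = comp (eta c) (fm R (fm L f))) /\
  (forall d d' (g : Hom S' (ov d) (ov d')), comp (fm L (fm R g)) (eps d') = comp (eps d) g) /\
  (forall c, comp (fm L (eta c)) (eps (fo L c)) = idm (ovS (fo L c))) /\
  (forall d, comp (eta (fo R d)) (fm R (eps d)) = idm (ovS (fo R d))).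

Definition FutureRetract {D : dspace} {S A B : pt D -> Prop}
  (P : functor S B S A) (iota : functor S A S B)
  (eta : forall c : Ob S B, Hom S (ov c) (ov (fo iota (fo P c))))
  (eps : forall d : Ob S A, Hom S (ov (fo P (fo iota d))) (ov d)) : Prop :=
  IsIncl iota /\ Adjunction P iota eta eps /\
  (forall a : Ob S B, A (ov a) -> proj1_sig (eta a) = proj1_sig (idm (ovS a))).

Definition Tt {T : Type} : T -> Prop := fun _ => True.

Definition inter {T : Type} (U V : T -> Prop) : T -> Prop := fun x => U x /\ V x.
Definition union {T : Type} (U V : T -> Prop) : T -> Prop := fun x => U x \/ V x.

Definition GeneratedBy (D : dspace) (X1 X2 : pt D -> Prop) : Prop :=
  forall g : I -> pt D, dpath D g <->
    exists (n : nat) (ts : nat -> R), ts 0%nat = 0 /\ ts n = 1 /\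
      forall i, (i < n)%nat -> ts i < ts (S i) /\
        (dpathS X1 (piece g (ts i) (ts (S i))) \/ dpathS X2 (piece g (ts i) (ts (S i)))).

(* Main.v *)
Require Import Defs.
From Stdlib Require Import Reals Lra Lia Psatz Relations ProofIrrelevance FunctionalExtensionality IndefiniteDescription PropExtensionality.
Import Defs.
Set Implicit Arguments.
Unset Strict Implicit.
Open Scope R_scope.

Lemma val_bd (t : I) : 0 <= val t <= 1.
Proof. destruct t; unfold val; simpl; auto. Qed.

Lemma val_mkI (r : R) : 0 <= r <= 1 -> val (mkI r) = r.
Proof. intros; unfold mkI, val; simpl; unfold Rmin, Rmax; repeat destruct Rle_dec; lra. Qed.

Lemma mkI_val (t : I) : mkI (val t) = t.
Proof. apply I_ext; rewrite val_mkI; auto using val_bd. Qed.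

Lemma mkI_eq (a b : R) : a = b -> mkI a = mkI b.
Proof. intros ->; auto. Qed.

Lemma val_mkI_bd (r : R) : 0 <= val (mkI r) <= 1.
Proof. apply val_bd. Qed.

Lemma mkI_lip (a b : R) : Rabs (val (mkI a) - val (mkI b)) <= Rabs (a - b).
Proof. unfold mkI, val; simpl; unfold Rmin, Rmax, Rabs;
  repeat destruct Rle_dec; repeat destruct Rcase_abs; lra. Qed.

Lemma mkI_mono (a b : R) : a <= b -> val (mkI a) <= val (mkI b).
Proof. unfold mkI, val; simpl; unfold Rmin, Rmax; repeat destruct Rle_dec; lra. Qed.

Lemma val_I0 : val I0 = 0. Proof. reflexivity. Qed.
Lemma val_I1 : val I1 = 1. Proof. reflexivity. Qed.
Lemma mkI0 : mkI 0 = I0. Proof. apply I_ext; rewrite val_mkI; simpl; lra. Qed.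
Lemma mkI1 : mkI 1 = I1. Proof. apply I_ext; rewrite val_mkI; simpl; unfold val; simpl; lra. Qed.

Lemma concat_l {T} (a b : I -> T) t : val t <= 1/2 -> concat a b t = a (mkI (2 * val t)).
Proof. intros h; unfold concat; destruct Rle_dec; [auto|lra]. Qed.
Lemma concat_r {T} (a b : I -> T) t : val t > 1/2 -> concat a b t = b (mkI (2 * val t - 1)).
Proof. intros h; unfold concat; destruct Rle_dec; [lra|auto]. Qed.

Definition LipM (f : R -> R) : Prop :=
  (exists L, 0 <= L /\ forall x y, 0 <= x <= 1 -> 0 <= y <= 1 -> Rabs (f x - f y) <= L * Rabs (x - y)) /\
  (forall x y, 0 <= x <= 1 -> 0 <= y <= 1 -> x <= y -> f x <= f y).

Definition rp (f : R -> R) (t : I) : I := mkI (f (val t)).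

Lemma rp_cont f : LipM f -> continuousII (rp f).
Proof.
  intros [[L [hL hl]] _] t eps he.
  exists (eps / (L + 1)). split. apply Rdiv_lt_0_compat; lra.
  intros t' ht. unfold rp. eapply Rle_lt_trans. apply mkI_lip.
  eapply Rle_lt_trans. apply hl; apply val_bd.
  apply Rle_lt_trans with ((L+1) * Rabs (val t' - val t)).
  apply Rmult_le_compat_r. apply Rabs_pos. lra.
  apply Rlt_le_trans with ((L + 1) * (eps / (L+1))).
  apply Rmult_lt_compat_l; lra. right; field; lra.
Qed.

Lemma rp_mono f : LipM f -> nondecreasing (rp f).
Proof. intros [_ hm] s t h. unfold rp. apply mkI_mono. apply hm; auto using val_bd. Qed.

Lemma dpath_rp (D : dspace) g f : dpath D g -> LipM f -> dpath D (fun t => g (rp f t)).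
Proof. intros; apply dpath_reparam; auto using rp_cont, rp_mono. Qed.
Lemma psi_bd a0 a1 b0 b1 y y' : 0 <= y' <= 1 -> 0 <= b1 - b0 <= 1 ->
  Rabs (((1-y')*a0 + y'*a1) - ((1-y)*b0 + y*b1)) <= Rabs (a0-b0) + Rabs (a1-b1) + Rabs (y'-y).
Proof.
  intros h1 h2.
  replace (((1-y')*a0 + y'*a1) - ((1-y)*b0 + y*b1)) with
    ((1-y')*(a0-b0) + y'*(a1-b1) + (y'-y)*(b1-b0)) by ring.
  eapply Rle_trans. apply Rabs_triang. eapply Rle_trans. apply Rplus_le_compat_r. apply Rabs_triang.
  rewrite !Rabs_mult. rewrite (Rabs_pos_eq (1-y')) by lra. rewrite (Rabs_pos_eq y') by lra.
  rewrite (Rabs_pos_eq (b1-b0)) by lra.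
  assert (Rabs (a0-b0) >= 0) by (apply Rle_ge, Rabs_pos).
  assert (Rabs (a1-b1) >= 0) by (apply Rle_ge, Rabs_pos).
  assert (Rabs (y'-y) >= 0) by (apply Rle_ge, Rabs_pos).
  nra.
Qed.

Lemma LipM_range f : LipM f -> f 0 = 0 -> f 1 = 1 -> forall x, 0 <= x <= 1 -> 0 <= f x <= 1.
Proof. intros [_ hm] h0 h1 x hx. split.
  rewrite <- h0; apply hm; lra. rewrite <- h1; apply hm; lra. Qed.

Lemma dihom_rep (D : dspace) (S : pt D -> Prop) g f0 f1 :
  dpathS S g -> LipM f0 -> LipM f1 -> f0 0 = 0 -> f0 1 = 1 -> f1 0 = 0 -> f1 1 = 1 ->
  (forall x, 0 <= x <= 1 -> f0 x <= f1 x) ->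
  dihom D S (fun t => g (rp f0 t)) (fun t => g (rp f1 t)).
Proof.
  intros [gd gS] hf0 hf1 a0 b0 a1 b1 hle.
  pose proof (LipM_range hf0 a0 b0) as r0. pose proof (LipM_range hf1 a1 b1) as r1.
  destruct hf0 as [[L0 [hL0 l0]] m0]. destruct hf1 as [[L1 [hL1 l1]] m1].
  set (psi := fun x y => (1-y) * f0 x + y * f1 x).
  assert (pbd : forall x y x' y', 0<=x<=1 -> 0<=y<=1 -> 0<=x'<=1 -> 0<=y'<=1 ->
    Rabs (psi x' y' - psi x y) <= (L0 + L1 + 1) * Rmax (Rabs (x'-x)) (Rabs (y'-y))).
  { intros x y x' y' hx hy hx' hy'. unfold psi.
    eapply Rle_trans. apply psi_bd. auto. specialize (hle x hx). specialize (r0 x hx). specialize (r1 x hx). lra.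
    pose proof (l0 x' x hx' hx). pose proof (l1 x' x hx' hx).
    pose proof (Rmax_l (Rabs (x'-x)) (Rabs (y'-y))). pose proof (Rmax_r (Rabs (x'-x)) (Rabs (y'-y))).
    pose proof (Rabs_pos (x'-x)). nra. }
  assert (pmono : forall x y x' y', 0<=x<=1 -> 0<=y<=1 -> 0<=x'<=1 -> 0<=y'<=1 -> x <= x' -> y <= y' ->
    psi x y <= psi x' y').
  { intros x y x' y' hx hy hx' hy' hxx hyy. unfold psi.
    pose proof (m0 _ _ hx hx' hxx). pose proof (m1 _ _ hx hx' hxx). pose proof (hle x' hx'). nra. }
  exists (fun t s => g (mkI (psi (val t) (val s)))).
  split; [|split; [|split; [|split; [|split; [|split]]]]].
  - intros U hU t s hUs.
    destruct (dpath_cont D g gd U hU _ hUs) as [e [he hE]].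
    exists (e / (L0+L1+2)). split. apply Rdiv_lt_0_compat; lra.
    intros t' s' ht hs. apply hE.
    eapply Rle_lt_trans. apply mkI_lip. eapply Rle_lt_trans. apply pbd; apply val_bd.
    apply Rle_lt_trans with ((L0+L1+1) * (e/(L0+L1+2))).
    apply Rmult_le_compat_l. lra. apply Rmax_lub; lra.
    apply Rlt_le_trans with ((L0+L1+2) * (e/(L0+L1+2))). apply Rmult_lt_compat_r.
    apply Rdiv_lt_0_compat; lra. lra. right; field; lra.
  - intros u v cu mu cv mv.
    apply dpath_reparam with (g := g) (phi := fun r => mkI (psi (val (u r)) (val (v r)))); auto.
    + intros r e he.
      destruct (cu r (e/(L0+L1+2))) as [d1 [hd1 H1]]. apply Rdiv_lt_0_compat; lra.
      destruct (cv r (e/(L0+L1+2))) as [d2 [hd2 H2]]. apply Rdiv_lt_0_compat; lra.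
      exists (Rmin d1 d2). split. apply Rmin_glb_lt; auto.
      intros r' hr. specialize (H1 r'). specialize (H2 r').
      assert (Rabs (val r' - val r) < d1) by (eapply Rlt_le_trans; [apply hr| apply Rmin_l]).
      assert (Rabs (val r' - val r) < d2) by (eapply Rlt_le_trans; [apply hr| apply Rmin_r]).
      eapply Rle_lt_trans. apply mkI_lip. eapply Rle_lt_trans. apply pbd; apply val_bd.
      apply Rle_lt_trans with ((L0+L1+1) * (e/(L0+L1+2))).
      apply Rmult_le_compat_l. lra. apply Rmax_lub; left; auto.
      apply Rlt_le_trans with ((L0+L1+2) * (e/(L0+L1+2))). apply Rmult_lt_compat_r.
      apply Rdiv_lt_0_compat; lra. lra. right; field; lra.
    + intros r r' h. apply mkI_mono. apply pmono; try apply val_bd; auto.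
  - intros; apply gS.
  - intros t. unfold rp. f_equal. apply mkI_eq. unfold psi. rewrite val_I0. ring.
  - intros t. unfold rp. f_equal. apply mkI_eq. unfold psi. rewrite val_I1. ring.
  - intros s. unfold rp, psi. f_equal. apply mkI_eq. rewrite val_I0, a0, a1. ring.
  - intros s. unfold rp, psi. f_equal. apply mkI_eq. rewrite val_I1, b0, b1. ring.
Qed.
Lemma LipM_id : LipM (fun x => x).
Proof. split. exists 1. split. lra. intros; lra. intros; lra. Qed.

Lemma LipM_min f g : LipM f -> LipM g -> LipM (fun x => Rmin (f x) (g x)).
Proof.
  intros [[L1 [h1 l1]] m1] [[L2 [h2 l2]] m2]. split.
  - exists (L1 + L2). split. lra. intros x y hx hy.
    specialize (l1 x y hx hy). specialize (l2 x y hx hy).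
    pose proof (Rabs_pos (x-y)).
    set (K := Rabs (x-y)) in *.
    assert (L1 * K + L2 * K = (L1 + L2) * K) by ring.
    revert l1 l2. unfold Rmin, Rabs. repeat destruct Rle_dec; repeat destruct Rcase_abs; intros; nra.
  - intros x y hx hy hxy. specialize (m1 x y hx hy hxy). specialize (m2 x y hx hy hxy).
    unfold Rmin. repeat destruct Rle_dec; lra.
Qed.

Lemma rp_id : forall (T : Type) (g : I -> T), (fun t => g (rp (fun x => x) t)) = g.
Proof. intros. apply functional_extensionality; intro t. unfold rp. rewrite mkI_val. auto. Qed.

Lemma dihom_dpath (D : dspace) S g h : dihom D S g h -> dpathS S g /\ dpathS S h /\ g I0 = h I0 /\ g I1 = h I1.
Proof.
  intros [H [hc [hd [hS [h0 [h1 [e0 e1]]]]]]].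
  assert (cid : continuousII (fun t => t)) by (intros t e he; exists e; split; auto).
  assert (mid : nondecreasing (fun t => t)) by (intros s t; auto).
  assert (cc : forall c : I, continuousII (fun _ => c)).
  { intros c t e he; exists 1; split; [lra|]. intros; rewrite Rminus_diag, Rabs_R0; auto. }
  assert (mc : forall c : I, nondecreasing (fun _ => c)) by (intros c s t _; lra).
  split; [|split].
  - split. pose proof (hd (fun t => t) (fun _ => I0) cid mid (cc I0) (mc I0)).
    replace g with (fun r => H r I0); auto. apply functional_extensionality; auto.
    intros t; rewrite <- h0; auto.
  - split. pose proof (hd (fun t => t) (fun _ => I1) cid mid (cc I1) (mc I1)).
    replace h with (fun r => H r I1); auto. apply functional_extensionality; auto.
    intros t; rewrite <- h1; auto.
  - rewrite <- h0, <- h1, <- h0, <- h1. rewrite e0, e1, e0, e1. auto.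
Qed.

Lemma equiv_ends (D : dspace) S g h : equivS D S g h -> g I0 = h I0 /\ g I1 = h I1.
Proof.
  induction 1.
  - destruct (dihom_dpath H) as [_ [_ [a b]]]; auto.
  - auto.
  - destruct IHclos_refl_sym_trans; auto.
  - destruct IHclos_refl_sym_trans1, IHclos_refl_sym_trans2; split; congruence.
Qed.

Lemma equiv_dpath_iff (D : dspace) S g h : equivS D S g h -> (dpathS S g <-> dpathS S h).
Proof.
  intros E; induction E; try tauto.
  destruct (dihom_dpath H) as [a [b _]]; tauto.
Qed.
Lemma equiv_dpath (D : dspace) S g h : equivS D S g h -> dpathS S g -> dpathS S h.
Proof. intros E; apply (equiv_dpath_iff E). Qed.

Lemma equiv_sym (D : dspace) S g h : equivS D S g h -> equivS D S h g.
Proof. apply rst_sym. Qed.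
Lemma equiv_trans (D : dspace) S g h k : equivS D S g h -> equivS D S h k -> equivS D S g k.
Proof. apply rst_trans. Qed.
Lemma equiv_refl (D : dspace) S g : equivS D S g g.
Proof. apply rst_refl. Qed.

Lemma equiv_rep (D : dspace) S g f : dpathS S g -> LipM f -> f 0 = 0 -> f 1 = 1 ->
  equivS D S g (fun t => g (rp f t)).
Proof.
  intros hg hf h0 h1.
  pose proof (LipM_min LipM_id hf) as hm.
  assert (E1 : dihom D S (fun t => g (rp (fun x => Rmin x (f x)) t)) (fun t => g (rp (fun x => x) t))).
  { apply dihom_rep; auto using LipM_id; try (rewrite h0 || rewrite h1); unfold Rmin;
    repeat destruct Rle_dec; try lra. intros; apply Rmin_l. }
  assert (E2 : dihom D S (fun t => g (rp (fun x => Rmin x (f x)) t)) (fun t => g (rp f t))).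
  { apply dihom_rep; auto; try (rewrite h0 || rewrite h1); unfold Rmin;
    repeat destruct Rle_dec; try lra. intros; apply Rmin_r. }
  rewrite rp_id in E1.
  eapply equiv_trans. apply equiv_sym. apply rst_step. exact E1. apply rst_step; exact E2.
Qed.

Lemma equiv_mono (D : dspace) (S S' : pt D -> Prop) g h : (forall x, S x -> S' x) ->
  equivS D S g h -> equivS D S' g h.
Proof.
  intros hs E; induction E.
  - apply rst_step. destruct H as [H' [a [b [c d]]]]. exists H'; repeat split; try tauto.
    intros; apply hs; apply c.
  - apply rst_refl.
  - apply rst_sym; auto.
  - eapply rst_trans; eauto.
Qed.
Lemma cross (u : I -> I) : continuousII u -> val (u I0) < 1/2 -> 1/2 < val (u I1) ->
  exists r0, 0 < r0 < 1 /\ val (u (mkI r0)) = 1/2.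
Proof.
  intros cu h0 h1.
  set (f := fun x => val (u (mkI x)) - 1/2).
  assert (cf : continuity f).
  { intros x e he. destruct (cu (mkI x) e he) as [d [hd hD]].
    exists d; split; auto. intros x' [_ hx']. simpl in *. unfold Rdist in *.
    unfold f. replace (val (u (mkI x')) - 1 / 2 - (val (u (mkI x)) - 1 / 2)) with
      (val (u (mkI x')) - val (u (mkI x))) by ring. apply hD.
    eapply Rle_lt_trans. apply mkI_lip. auto. }
  destruct (IVT f 0 1 cf) as [z [hz fz]]. lra.
  unfold f; rewrite mkI0; lra. unfold f; rewrite mkI1; lra.
  exists z. unfold f in fz. split; [|lra].
  destruct (Req_dec z 0) as [e|e]. subst. rewrite mkI0 in fz. lra.
  destruct (Req_dec z 1) as [e'|e']. subst. rewrite mkI1 in fz. lra. lra.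
Qed.

Lemma LipM_affine a b : 0 <= a <= b -> LipM (fun x => a + (b - a) * x).
Proof.
  intros h. split. exists (b - a). split. lra. intros x y _ _.
  replace (a + (b-a)*x - (a + (b-a)*y)) with ((b-a)*(x-y)) by ring.
  rewrite Rabs_mult, Rabs_pos_eq by lra. lra.
  intros; nra.
Qed.

Lemma piece_dpath (D : dspace) g a b : 0 <= a <= b -> dpath D g -> dpath D (piece g a b).
Proof. intros h hg. exact (@dpath_rp D g _ hg (LipM_affine h)). Qed.

Lemma piece_dpathS (D : dspace) S g a b : 0 <= a <= b -> dpathS S g -> dpathS (D:=D) S (piece g a b).
Proof. intros h [hg hs]. split. apply piece_dpath; auto. intros; apply hs. Qed.

Lemma glue (D : dspace) (rho : I -> pt D) r0 : 0 < r0 < 1 ->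
  dpath D (piece rho 0 r0) -> dpath D (piece rho r0 1) -> dpath D rho.
Proof.
  intros hr h1 h2.
  set (c1 := / (2 * r0)). set (c2 := / (2 * (1 - r0))).
  assert (e1 : c1 * r0 = 1/2) by (unfold c1; field; lra).
  assert (e2 : c2 * (1 - r0) = 1/2) by (unfold c2; field; lra).
  assert (p1 : c1 > 0) by (unfold c1; apply Rinv_0_lt_compat; lra).
  assert (p2 : c2 > 0) by (unfold c2; apply Rinv_0_lt_compat; lra).
  set (phi := fun x => if Rle_dec x r0 then c1 * x else 1/2 + c2 * (x - r0)).
  assert (hphi : LipM phi).
  { split. exists (c1 + c2). split. lra. intros x y hx hy. unfold phi.
    destruct Rle_dec; destruct Rle_dec; unfold Rabs; repeat destruct Rcase_abs; nra.
    intros x y hx hy hxy; unfold phi. destruct Rle_dec; destruct Rle_dec; nra. }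
  assert (hc := dpath_concat D _ _ h1 h2).
  assert (E : piece rho 0 r0 I1 = piece rho r0 1 I0).
  { unfold piece. f_equal. apply mkI_eq. rewrite val_I0, val_I1. ring. }
  specialize (hc E). pose proof (@dpath_rp D _ _ hc hphi) as hh.
  replace rho with (fun t => concat (piece rho 0 r0) (piece rho r0 1) (rp phi t)); auto.
  apply functional_extensionality; intro t. pose proof (val_bd t).
  unfold rp, phi. destruct Rle_dec.
  - assert (hv : val (mkI (c1 * val t)) = c1 * val t) by (rewrite val_mkI; nra).
    rewrite concat_l by (rewrite hv; nra). rewrite hv. unfold piece.
    rewrite <- (mkI_val t) at 2. f_equal. apply mkI_eq. rewrite val_mkI by nra.
    replace (0 + (r0 - 0) * (2 * (c1 * val t))) with (2 * (c1 * r0) * val t) by ring.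
    rewrite e1. lra.
  - assert (hv : val (mkI (1/2 + c2 * (val t - r0))) = 1/2 + c2 * (val t - r0)).
    { rewrite val_mkI; auto. split. nra. assert (c2 * (val t - r0) <= c2 * (1 - r0)) by nra. lra. }
    rewrite concat_r by (rewrite hv; nra). rewrite hv. unfold piece.
    rewrite <- (mkI_val t) at 2. f_equal. apply mkI_eq.
    assert (c2 * (val t - r0) <= c2 * (1 - r0)) by nra.
    rewrite val_mkI by nra.
    clearbody c1 c2. nra.
Qed.
Lemma comp_cont (a b : I -> I) : continuousII a -> continuousII b -> continuousII (fun r => a (b r)).
Proof.
  intros ca cb t e he. destruct (ca (b t) e he) as [d1 [hd1 H1]].
  destruct (cb t d1 hd1) as [d2 [hd2 H2]]. exists d2; split; auto.
Qed.
Lemma comp_mono (a b : I -> I) : nondecreasing a -> nondecreasing b -> nondecreasing (fun r => a (b r)).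
Proof. intros ma mb s t h; apply ma, mb, h. Qed.

Lemma LipM_lin k c : 0 <= k -> LipM (fun x => k * x + c).
Proof.
  intros hk. split. exists k. split; auto. intros x y _ _.
  replace (k*x+c - (k*y+c)) with (k*(x-y)) by ring. rewrite Rabs_mult, (Rabs_pos_eq k) by lra. lra.
  intros; nra.
Qed.

Lemma dihom_concat (D : dspace) S g g' d d' : dihom D S g g' -> dihom D S d d' -> g I1 = d I0 ->
  dihom D S (concat g d) (concat g' d').
Proof.
  intros [H1 [c1 [m1 [s1 [a1 [b1 [e1 f1]]]]]]] [H2 [c2 [m2 [s2 [a2 [b2 [e2 f2]]]]]]] hgd.
  assert (J : forall s, H1 I1 s = H2 I0 s) by (intros; rewrite f1, e2; auto).
  exists (fun t s => concat (fun t => H1 t s) (fun t => H2 t s) t).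
  split; [|split; [|split; [|split; [|split; [|split]]]]].
  - intros U hU t s hK. pose proof (val_bd t) as bt.
    destruct (total_order_T (val t) (1/2)) as [[lt|eq]|gt].
    + rewrite concat_l in hK by lra.
      destruct (c1 U hU _ _ hK) as [e [he hE]].
      exists (Rmin (e/2) (1/2 - val t)). split. apply Rmin_glb_lt; lra.
      intros t' s' ht hs. pose proof (Rmin_l (e/2) (1/2 - val t)). pose proof (Rmin_r (e/2) (1/2 - val t)).
      assert (val t' < 1/2) by (revert ht; unfold Rabs; destruct Rcase_abs; lra).
      rewrite concat_l by lra. apply hE.
      eapply Rle_lt_trans. apply mkI_lip. revert ht; unfold Rabs; repeat destruct Rcase_abs; lra.
      lra.
    + rewrite concat_l in hK by lra.
      replace (mkI (2 * val t)) with I1 in hK by (rewrite eq, <- mkI1; apply mkI_eq; lra).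
      destruct (c1 U hU _ _ hK) as [ea [hea hEa]].
      rewrite J in hK. destruct (c2 U hU _ _ hK) as [eb [heb hEb]].
      exists (Rmin ea eb / 2). split. unfold Rmin; destruct Rle_dec; lra.
      intros t' s' ht hs. pose proof (Rmin_l ea eb). pose proof (Rmin_r ea eb).
      destruct (Rle_dec (val t') (1/2)).
      * rewrite concat_l by lra. apply hEa.
        rewrite <- mkI1. eapply Rle_lt_trans. apply mkI_lip. revert ht; rewrite eq; unfold Rabs; repeat destruct Rcase_abs; lra.
        lra.
      * rewrite concat_r by lra. apply hEb.
        rewrite <- mkI0. eapply Rle_lt_trans. apply mkI_lip. revert ht; rewrite eq; unfold Rabs; repeat destruct Rcase_abs; lra.
        lra.
    + rewrite concat_r in hK by lra.
      destruct (c2 U hU _ _ hK) as [e [he hE]].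
      exists (Rmin (e/2) (val t - 1/2)). split. apply Rmin_glb_lt; lra.
      intros t' s' ht hs. pose proof (Rmin_l (e/2) (val t - 1/2)). pose proof (Rmin_r (e/2) (val t - 1/2)).
      assert (val t' > 1/2) by (revert ht; unfold Rabs; destruct Rcase_abs; lra).
      rewrite concat_r by lra. apply hE.
      eapply Rle_lt_trans. apply mkI_lip. revert ht; unfold Rabs; repeat destruct Rcase_abs; lra.
      lra.
  - intros u v cu mu cv mv.
    set (rho := fun r => concat (fun t => H1 t (v r)) (fun t => H2 t (v r)) (u r)).
    set (al := fun r => H1 (rp (fun x => 2 * x + 0) (u r)) (v r)).
    set (be := fun r => H2 (rp (fun x => 2 * x + -1) (u r)) (v r)).
    assert (hal : dpath D al).
    { apply m1; auto. apply comp_cont; auto. apply rp_cont, LipM_lin; lra.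
      apply comp_mono; auto. apply rp_mono, LipM_lin; lra. }
    assert (hbe : dpath D be).
    { apply m2; auto. apply comp_cont; auto. apply rp_cont, LipM_lin; lra.
      apply comp_mono; auto. apply rp_mono, LipM_lin; lra. }
    assert (ra : forall r, val (u r) <= 1/2 -> rho r = al r).
    { intros r h. unfold rho, al, rp. rewrite concat_l by auto. f_equal. apply mkI_eq. ring. }
    assert (rb : forall r, val (u r) >= 1/2 -> rho r = be r).
    { intros r h. unfold rho, be, rp. destruct (Rle_dec (val (u r)) (1/2)).
      - rewrite concat_l by auto. replace (val (u r)) with (1/2) by lra.
        replace (mkI (2 * (1/2))) with I1 by (rewrite <- mkI1; apply mkI_eq; lra).
        replace (mkI (2 * (1/2) + -1)) with I0 by (rewrite <- mkI0; apply mkI_eq; lra). apply J.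
      - rewrite concat_r by lra. f_equal; try (apply mkI_eq; ring). }
    change (dpath D rho).
    destruct (Rle_dec (val (u I1)) (1/2)) as [q1|q1].
    { replace rho with al; auto. apply functional_extensionality; intro r2. symmetry; apply ra.
      eapply Rle_trans; [apply mu|exact q1]. apply val_bd. }
    destruct (Rle_dec (1/2) (val (u I0))) as [q2|q2].
    { replace rho with be; auto. apply functional_extensionality; intro r2. symmetry; apply rb.
      apply Rle_ge. eapply Rle_trans; [exact q2|apply mu]. apply val_bd. }
    destruct (cross cu) as [r0 [hr0 hu0]]; try lra.
    apply glue with r0; auto.
    + replace (piece rho 0 r0) with (piece al 0 r0). apply piece_dpath; auto; lra.
      apply functional_extensionality; intro x. unfold piece. symmetry; apply ra.
      rewrite <- hu0. apply mu. apply mkI_mono. pose proof (val_bd x). nra.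
    + replace (piece rho r0 1) with (piece be r0 1). apply piece_dpath; auto; lra.
      apply functional_extensionality; intro x. unfold piece. symmetry; apply rb.
      rewrite <- hu0. apply Rle_ge, mu. apply mkI_mono. pose proof (val_bd x). nra.
  - intros t s. unfold concat. destruct Rle_dec; auto.
  - intros t. unfold concat. destruct Rle_dec; auto.
  - intros t. unfold concat. destruct Rle_dec; auto.
  - intros s. rewrite !concat_I0. auto.
  - intros s. rewrite !concat_I1. auto.
Qed.
Lemma dihom_refl (D : dspace) S d : dpathS S d -> dihom D S d d.
Proof.
  intros [hd hs]. exists (fun t s => d t).
  split; [|split; [|split; [|split; [|split; [|split]]]]]; auto.
  - intros U hU t s hK. destruct (dpath_cont D d hd U hU t hK) as [e [he hE]].
    exists e; split; auto.
  - intros u v cu mu cv mv. apply dpath_reparam; auto.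
Qed.

Lemma concat_dpathS (D : dspace) S g d : dpathS S g -> dpathS S d -> g I1 = d I0 ->
  dpathS (D:=D) S (concat g d).
Proof.
  intros [hg sg] [hd sd] e. split. apply dpath_concat; auto.
  intros t; unfold concat; destruct Rle_dec; auto.
Qed.

Lemma equiv_concat_l (D : dspace) S g g' d : equivS D S g g' -> dpathS S d -> g I1 = d I0 ->
  equivS D S (concat g d) (concat g' d).
Proof.
  intros E hd. induction E; intros e.
  - apply rst_step. apply dihom_concat; auto. apply dihom_refl; auto.
  - apply rst_refl.
  - apply rst_sym. apply IHE. destruct (equiv_ends E). congruence.
  - eapply rst_trans. apply IHE1; auto. apply IHE2. destruct (equiv_ends E1). congruence.
Qed.

Lemma equiv_concat_r (D : dspace) S g d d' : equivS D S d d' -> dpathS S g -> g I1 = d I0 ->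
  equivS D S (concat g d) (concat g d').
Proof.
  intros E hg. induction E; intros e.
  - apply rst_step. apply dihom_concat; auto. apply dihom_refl; auto.
  - apply rst_refl.
  - apply rst_sym. apply IHE. destruct (equiv_ends E). congruence.
  - eapply rst_trans. apply IHE1; auto. apply IHE2. destruct (equiv_ends E1). congruence.
Qed.

Lemma equiv_concat (D : dspace) S g g' d d' : equivS D S g g' -> equivS D S d d' ->
  dpathS S g -> dpathS S d -> g I1 = d I0 -> equivS D S (concat g d) (concat g' d').
Proof.
  intros E1 E2 hg hd e. eapply rst_trans. apply equiv_concat_l; eauto.
  apply equiv_concat_r; auto. eapply equiv_dpath; eauto. destruct (equiv_ends E1); congruence.
Qed.

Lemma LipM_max f g : LipM f -> LipM g -> LipM (fun x => Rmax (f x) (g x)).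
Proof.
  intros [[L1 [h1 l1]] m1] [[L2 [h2 l2]] m2]. split.
  - exists (L1 + L2). split. lra. intros x y hx hy.
    specialize (l1 x y hx hy). specialize (l2 x y hx hy).
    pose proof (Rabs_pos (x-y)).
    set (K := Rabs (x-y)) in *.
    assert (L1 * K + L2 * K = (L1 + L2) * K) by ring.
    revert l1 l2. unfold Rmax, Rabs. repeat destruct Rle_dec; repeat destruct Rcase_abs; intros; nra.
  - intros x y hx hy hxy. specialize (m1 x y hx hy hxy). specialize (m2 x y hx hy hxy).
    unfold Rmax. repeat destruct Rle_dec; lra.
Qed.

Definition fA (x : R) := Rmin (2 * x + 0) (Rmin (1 * x + 1/4) (1/2 * x + 1/2)).

Lemma concat_assoc_eq {T} (a b c : I -> T) :
  concat (concat a b) c = fun t => concat a (concat b c) (rp fA t).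
Proof.
  apply functional_extensionality; intro t. pose proof (val_bd t). unfold rp, fA.
  destruct (Rle_dec (val t) (1/4)).
  - replace (Rmin (2 * val t + 0) (Rmin (1 * val t + 1 / 4) (1 / 2 * val t + 1 / 2))) with (2 * val t)
      by (unfold Rmin; repeat destruct Rle_dec; lra).
    rewrite concat_l by lra. rewrite concat_l by (rewrite val_mkI; lra).
    rewrite concat_l by (rewrite val_mkI; lra). rewrite !val_mkI by lra. auto.
  - destruct (Rle_dec (val t) (1/2)).
    + replace (Rmin (2 * val t + 0) (Rmin (1 * val t + 1 / 4) (1 / 2 * val t + 1 / 2))) with (val t + 1/4)
        by (unfold Rmin; repeat destruct Rle_dec; lra).
      rewrite concat_l by lra. rewrite (concat_r a b) by (rewrite val_mkI; lra).
      rewrite (concat_r a (concat b c)) by (rewrite val_mkI; lra).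
      rewrite (@val_mkI (val t + 1/4)) by lra. rewrite concat_l by (rewrite val_mkI; lra).
      rewrite ?val_mkI by lra. f_equal; apply mkI_eq; lra.
    + replace (Rmin (2 * val t + 0) (Rmin (1 * val t + 1 / 4) (1 / 2 * val t + 1 / 2))) with (1/2 * val t + 1/2)
        by (unfold Rmin; repeat destruct Rle_dec; lra).
      rewrite (concat_r (concat a b) c) by lra. rewrite (concat_r a (concat b c)) by (rewrite val_mkI; lra).
      rewrite (@val_mkI (1/2 * val t + 1/2)) by lra. rewrite concat_r by (rewrite val_mkI; lra).
      rewrite ?val_mkI by lra. f_equal; apply mkI_eq; lra.
Qed.

Lemma LipM_fA : LipM fA.
Proof. unfold fA. apply LipM_min. apply LipM_lin; lra. apply LipM_min; apply LipM_lin; lra. Qed.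

Lemma equiv_assoc (D : dspace) S a b c : dpathS S a -> dpathS S b -> dpathS S c ->
  a I1 = b I0 -> b I1 = c I0 ->
  equivS D S (concat (concat a b) c) (concat a (concat b c)).
Proof.
  intros ha hb hc e1 e2. rewrite concat_assoc_eq. apply equiv_sym. apply equiv_rep.
  apply concat_dpathS; auto. apply concat_dpathS; auto. rewrite concat_I0; auto.
  apply LipM_fA. unfold fA, Rmin; repeat destruct Rle_dec; lra. unfold fA, Rmin; repeat destruct Rle_dec; lra.
Qed.

Lemma equiv_runit (D : dspace) S g : dpathS S g -> equivS D S (concat g (fun _ => g I1)) g.
Proof.
  intros hg. replace (concat g (fun _ => g I1)) with (fun t => g (rp (fun x => Rmin (2*x+0) (0*x+1)) t)).
  apply equiv_sym, equiv_rep; auto. apply LipM_min; apply LipM_lin; lra.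
  unfold Rmin; repeat destruct Rle_dec; lra. unfold Rmin; repeat destruct Rle_dec; lra.
  apply functional_extensionality; intro t. pose proof (val_bd t). unfold rp, concat. destruct Rle_dec.
  - f_equal. apply mkI_eq. unfold Rmin; destruct Rle_dec; lra.
  - rewrite <- mkI1. f_equal. apply mkI_eq. unfold Rmin; destruct Rle_dec; lra.
Qed.

Lemma equiv_lunit (D : dspace) S g : dpathS S g -> equivS D S (concat (fun _ => g I0) g) g.
Proof.
  intros hg. replace (concat (fun _ => g I0) g) with (fun t => g (rp (fun x => Rmax (0*x+0) (2*x + -1)) t)).
  apply equiv_sym, equiv_rep; auto. apply LipM_max; apply LipM_lin; lra.
  unfold Rmax; repeat destruct Rle_dec; lra. unfold Rmax; repeat destruct Rle_dec; lra.
  apply functional_extensionality; intro t. pose proof (val_bd t). unfold rp, concat. destruct Rle_dec.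
  - rewrite <- mkI0. f_equal. apply mkI_eq. unfold Rmax; destruct Rle_dec; lra.
  - f_equal. apply mkI_eq. unfold Rmax; destruct Rle_dec; lra.
Qed.

Definition fS (a x : R) := if Rle_dec x (1/2) then 2 * a * x else a + (1 - a) * (2 * x - 1).

Lemma LipM_fS a : 0 <= a <= 1 -> LipM (fS a).
Proof.
  intros ha. split.
  - exists 2. split. lra. intros x y hx hy. unfold fS.
    destruct Rle_dec; destruct Rle_dec; unfold Rabs; repeat destruct Rcase_abs; nra.
  - intros x y hx hy hxy. unfold fS. destruct Rle_dec; destruct Rle_dec; nra.
Qed.

Lemma equiv_split (D : dspace) S g a : dpathS S g -> 0 <= a <= 1 ->
  equivS D S g (concat (piece g 0 a) (piece g a 1)).
Proof.
  intros hg ha. replace (concat (piece g 0 a) (piece g a 1)) with (fun t => g (rp (fS a) t)).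
  apply equiv_rep; auto. apply LipM_fS; auto.
  unfold fS; destruct Rle_dec; lra. unfold fS; destruct Rle_dec; lra.
  apply functional_extensionality; intro t. pose proof (val_bd t). unfold rp, fS, concat, piece.
  destruct Rle_dec; f_equal; apply mkI_eq; rewrite val_mkI; try lra; try ring.
Qed.
Definition mem {D : dspace} {S : pt D -> Prop} {a b : pt D} (f : Hom S a b) (g : I -> pt D) : Prop :=
  proj1_sig f g.

Lemma mem_rep (D : dspace) S (a b : pt D) (f : Hom S a b) g : mem f g ->
  proj1_sig f = equivS D S g /\ dpathS S g /\ g I0 = a /\ g I1 = b.
Proof.
  destruct f as [C [g0 [h0 [e0 [e1 ->]]]]]. unfold mem; simpl. intros E.
  pose proof (equiv_ends E) as [q0 q1]. split; [|split; [|split]].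
  - apply functional_extensionality; intro k. apply propositional_extensionality. split; intro Hk.
    eapply equiv_trans. apply equiv_sym; exact E. auto. eapply equiv_trans; eauto.
  - eapply equiv_dpath; eauto.
  - congruence.
  - congruence.
Qed.

Lemma mem_ex (D : dspace) S (a b : pt D) (f : Hom S a b) : exists g, mem f g.
Proof. destruct f as [C [g0 [h0 [e0 [e1 ->]]]]]. exists g0. unfold mem; simpl. apply equiv_refl. Qed.

Lemma Hom_eq (D : dspace) S (a b : pt D) (f f' : Hom S a b) : proj1_sig f = proj1_sig f' -> f = f'.
Proof. destruct f, f'; simpl. intros ->. f_equal. apply proof_irrelevance. Qed.

Lemma mem_class (D : dspace) S (a b : pt D) (f : Hom S a b) g h : mem f g -> equivS D S g h -> mem f h.
Proof. intros m E. destruct (mem_rep m) as [e _]. unfold mem; rewrite e; auto. Qed.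

Lemma mem_same (D : dspace) S (a b a' b' : pt D) (f : Hom S a b) (f' : Hom S a' b') g :
  mem f g -> mem f' g -> proj1_sig f = proj1_sig f'.
Proof. intros m m'. rewrite (proj1 (mem_rep m)), (proj1 (mem_rep m')). auto. Qed.

Lemma mem_equiv (D : dspace) S (a b : pt D) (f : Hom S a b) g h : mem f g -> mem f h -> equivS D S g h.
Proof. intros m m'. destruct (mem_rep m) as [e _]. unfold mem in m'; rewrite e in m'; auto. Qed.

Lemma comp_class (D : dspace) S (a b c : pt D) (f : Hom S a b) (h : Hom S b c) g d :
  mem f g -> mem h d -> proj1_sig (Defs.comp f h) = equivS D S (concat g d).
Proof.
  intros mf mh. unfold Defs.comp.
  destruct (constructive_indefinite_description _ (proj2_sig f)) as [g' [[g1 g2] [ga [gb eg]]]].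
  destruct (constructive_indefinite_description _ (proj2_sig h)) as [d' [[d1 d2] [db [dc ed]]]].
  simpl.
  assert (Eg : equivS D S g' g). { unfold mem in mf; rewrite eg in mf; auto. }
  assert (Ed : equivS D S d' d). { unfold mem in mh; rewrite ed in mh; auto. }
  assert (E : equivS D S (concat g' d') (concat g d)).
  { apply equiv_concat; [auto|auto|split;auto|split;auto|congruence]. }
  apply functional_extensionality; intro k. apply propositional_extensionality. split; intro Hk.
  eapply equiv_trans. apply equiv_sym; exact E. auto. eapply equiv_trans; eauto.
Qed.

Lemma mem_comp (D : dspace) S (a b c : pt D) (f : Hom S a b) (h : Hom S b c) g d :
  mem f g -> mem h d -> mem (Defs.comp f h) (concat g d).
Proof. intros mf mh. unfold mem. rewrite (comp_class mf mh). apply equiv_refl. Qed.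

Lemma mem_idm (D : dspace) S (x : pt D) (hx : S x) : mem (idm hx) (fun _ => x).
Proof. unfold mem; simpl. apply equiv_refl. Qed.

Lemma incl_mem (D : dspace) (S A S' A' : pt D -> Prop) (F : functor S A S' A') a b (f : Hom S (ov a) (ov b)) g :
  IsIncl F -> mem f g -> mem (fm F f) g.
Proof. intros [_ h] m. apply h; auto. Qed.

Lemma comp_assoc (D : dspace) S (a b c e : pt D) (f : Hom S a b) (g : Hom S b c) (h : Hom S c e) :
  Defs.comp (Defs.comp f g) h = Defs.comp f (Defs.comp g h).
Proof.
  destruct (mem_ex f) as [x mx]. destruct (mem_ex g) as [y my]. destruct (mem_ex h) as [z mz].
  apply Hom_eq. rewrite (comp_class (mem_comp mx my) mz), (comp_class mx (mem_comp my mz)).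
  destruct (mem_rep mx) as [_ [dx [x0 x1]]]. destruct (mem_rep my) as [_ [dy [y0 y1]]].
  destruct (mem_rep mz) as [_ [dz [z0 z1]]].
  apply functional_extensionality; intro k. apply propositional_extensionality.
  assert (E : equivS D S (concat (concat x y) z) (concat x (concat y z))) by (apply equiv_assoc; auto; congruence).
  split; intro Hk. eapply equiv_trans. apply equiv_sym; exact E. auto. eapply equiv_trans; eauto.
Qed.

Lemma comp_idr (D : dspace) S (a b : pt D) (f : Hom S a b) (hb : S b) : Defs.comp f (idm hb) = f.
Proof.
  destruct (mem_ex f) as [x mx]. apply Hom_eq. rewrite (comp_class mx (mem_idm hb)).
  destruct (mem_rep mx) as [e [dx [x0 x1]]]. rewrite e. subst b.
  apply functional_extensionality; intro k. apply propositional_extensionality.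
  pose proof (equiv_runit (D:=D) dx) as E.
  split; intro Hk. eapply equiv_trans. apply equiv_sym; exact E. auto. eapply equiv_trans; eauto.
Qed.

Lemma comp_idl (D : dspace) S (a b : pt D) (f : Hom S a b) (ha : S a) : Defs.comp (idm ha) f = f.
Proof.
  destruct (mem_ex f) as [x mx]. apply Hom_eq. rewrite (comp_class (mem_idm ha) mx).
  destruct (mem_rep mx) as [e [dx [x0 x1]]]. rewrite e. subst a.
  apply functional_extensionality; intro k. apply propositional_extensionality.
  pose proof (equiv_lunit (D:=D) dx) as E.
  split; intro Hk. eapply equiv_trans. apply equiv_sym; exact E. auto. eapply equiv_trans; eauto.
Qed.

Lemma Ob_eq (D : dspace) (S A : pt D -> Prop) (a a' : Ob S A) : ov a = ov a' -> a = a'.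
Proof. destruct a, a'; unfold ov; simpl. intros ->. f_equal. apply proof_irrelevance. Qed.
Lemma piece_piece {T} (g : I -> T) a b c d : 0 <= a <= b -> b <= 1 -> 0 <= c <= d -> d <= 1 ->
  piece (piece g a b) c d = piece g (a + (b-a)*c) (a + (b-a)*d).
Proof.
  intros h1 h2 h3 h4. apply functional_extensionality; intro u. pose proof (val_bd u).
  unfold piece. f_equal. apply mkI_eq. rewrite val_mkI by nra. ring.
Qed.

Lemma piece01 {T} (g : I -> T) : piece g 0 1 = g.
Proof. apply functional_extensionality; intro u. unfold piece.
  rewrite <- (mkI_val u) at 2. f_equal. apply mkI_eq. ring. Qed.

Lemma piece_I0 {T} (g : I -> T) a b : 0 <= a <= 1 -> piece g a b I0 = g (mkI a).
Proof. intros; unfold piece. f_equal. apply mkI_eq. rewrite val_I0. ring. Qed.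
Lemma piece_I1 {T} (g : I -> T) a b : piece g a b I1 = g (mkI b).
Proof. intros; unfold piece. f_equal. apply mkI_eq. rewrite val_I1. ring. Qed.

Definition Dec (D : dspace) (X1 X2 : pt D -> Prop) (n : nat) (ts : nat -> R) (g : I -> pt D) : Prop :=
  ts 0%nat = 0 /\ ts n = 1 /\ forall i, (i < n)%nat -> ts i < ts (S i) /\
        (dpathS X1 (piece g (ts i) (ts (S i))) \/ dpathS X2 (piece g (ts i) (ts (S i)))).
Arguments Dec : clear implicits.

Lemma Dec_lt D X1 X2 n ts g : Dec D X1 X2 n ts g -> forall i j, (i < j)%nat -> (j <= n)%nat -> ts i < ts j.
Proof.
  intros [_ [_ h]] i j hij. induction hij; intros hn.
  - apply h; lia.
  - eapply Rlt_trans. apply IHhij; lia. apply h; lia.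
Qed.

Lemma Dec_bd D X1 X2 n ts g : Dec D X1 X2 n ts g -> forall i, (i <= n)%nat -> 0 <= ts i <= 1.
Proof.
  intros hd i hi. destruct hd as [h0 [h1 h]] eqn:E. split.
  - destruct i. lra. rewrite <- h0. left. apply (Dec_lt hd); lia.
  - destruct (Nat.eq_dec i n). subst; lra. rewrite <- h1. left. apply (Dec_lt hd); lia.
Qed.

Lemma Dec_shift D X1 X2 m ts g : Dec D X1 X2 (S (S m)) ts g ->
  Dec D X1 X2 (S m) (fun i => (ts (S i) - ts 1%nat) / (1 - ts 1%nat)) (piece g (ts 1%nat) 1).
Proof.
  intros hd. pose proof (Dec_bd hd) as hb. pose proof (Dec_lt hd) as hl.
  assert (t1 : 0 < ts 1%nat < 1).
  { destruct hd as [h0 [h1 _]]. split. rewrite <- h0. apply hl; lia. rewrite <- h1. apply hl; lia. }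
  destruct hd as [h0 [h1 h]]. split; [|split].
  - simpl. unfold Rdiv. rewrite Rminus_diag. ring.
  - rewrite h1. field. lra.
  - intros i hi. split.
    + apply Rmult_lt_compat_r. apply Rinv_0_lt_compat; lra. apply Rplus_lt_compat_r. apply h; lia.
    + assert (E : piece (piece g (ts 1%nat) 1) ((ts (S i) - ts 1%nat) / (1 - ts 1%nat))
                   ((ts (S (S i)) - ts 1%nat) / (1 - ts 1%nat)) = piece g (ts (S i)) (ts (S (S i)))).
      { assert (ts 1%nat <= ts (S i)). { destruct i. lra. left; apply hl; lia. }
        assert (ts (S i) < ts (S (S i))) by (apply h; lia).
        assert (ts (S (S i)) <= 1) by (apply hb; lia).
        rewrite piece_piece; try lra.
        f_equal; field; lra.
        split. apply Rmult_le_pos. lra. left; apply Rinv_0_lt_compat; lra.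
        apply Rmult_le_compat_r. left; apply Rinv_0_lt_compat; lra. lra.
        apply Rmult_le_reg_r with (1 - ts 1%nat). lra. unfold Rdiv. rewrite Rmult_assoc, Rinv_l by lra. lra. }
      rewrite E. apply h. lia.
Qed.

Definition mkHom (D : dspace) (S : pt D -> Prop) (g : I -> pt D) (hg : dpathS S g) : Hom S (g I0) (g I1) :=
  exist _ (equivS D S g) (ex_intro _ g (conj hg (conj eq_refl (conj eq_refl eq_refl)))).

Lemma mem_mkHom D S g hg : mem (@mkHom D S g hg) g.
Proof. unfold mem; simpl. apply equiv_refl. Qed.

Definition hom_of_eq (D : dspace) (S : pt D -> Prop) (a b : pt D) (hb : S b) (e : a = b) : Hom S a b :=
  exist _ (equivS D S (fun _ => b))
    (ex_intro _ (fun _ => b) (conj (conj (dpath_const D b) (fun _ => hb)) (conj (eq_sym e) (conj eq_refl eq_refl)))).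

Lemma equiv_eq_class D S g h : equivS D S g h -> equivS D S g = equivS D S h.
Proof.
  intros E. apply functional_extensionality; intro k. apply propositional_extensionality.
  split; intro Hk. eapply equiv_trans. apply equiv_sym; exact E. auto. eapply equiv_trans; eauto.
Qed.

Lemma dpathS_Tt (D : dspace) S g : dpathS S g -> dpathS (D:=D) Tt g.
Proof. intros [h _]. split; auto. intros; exact Logic.I. Qed.

Lemma equiv_Tt (D : dspace) S g h : equivS D S g h -> equivS D Tt g h.
Proof. apply equiv_mono. intros; exact Logic.I. Qed.

Inductive Gen (D : dspace) (X1 X2 B1 B2 : pt D -> Prop)
  (j1 : functor X1 B1 Tt (union B1 B2)) (j2 : functor X2 B2 Tt (union B1 B2)) :
  forall a b : Ob Tt (union B1 B2), Hom Tt (ov a) (ov b) -> Prop :=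
| gen1 : forall y y' (h : Hom X1 (ov y) (ov y')), @Gen D X1 X2 B1 B2 j1 j2 (fo j1 y) (fo j1 y') (fm j1 h)
| gen2 : forall y y' (h : Hom X2 (ov y) (ov y')), @Gen D X1 X2 B1 B2 j1 j2 (fo j2 y) (fo j2 y') (fm j2 h)
| genc : forall a b c f g, @Gen D X1 X2 B1 B2 j1 j2 a b f -> @Gen D X1 X2 B1 B2 j1 j2 b c g -> @Gen D X1 X2 B1 B2 j1 j2 a c (Defs.comp f g).
Arguments Gen {D X1 X2 B1 B2} j1 j2 a b f.
Lemma idm_class (D : dspace) S (x : pt D) (hx : S x) : proj1_sig (idm hx) = equivS D S (fun _ => x).
Proof. reflexivity. Qed.

Lemma idclass_pts (D : dspace) S (a b x : pt D) (f : Hom S a b) :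
  proj1_sig f = equivS D S (fun _ => x) -> a = x /\ b = x.
Proof.
  intros E. destruct (mem_ex f) as [g m]. destruct (mem_rep m) as [e [_ [g0 g1]]].
  unfold mem in m. rewrite E in m. destruct (equiv_ends m). split; congruence.
Qed.

Lemma idclass_mem (D : dspace) S (a b x : pt D) (f : Hom S a b) :
  proj1_sig f = equivS D S (fun _ => x) -> mem f (fun _ => x).
Proof. intros E. unfold mem. rewrite E. apply equiv_refl. Qed.

Lemma class_ext (D : dspace) S (a b a' b' : pt D) (f : Hom S a b) (f' : Hom S a' b') g g' :
  mem f g -> mem f' g' -> equivS D S g g' -> proj1_sig f = proj1_sig f'.
Proof.
  intros m m' E. rewrite (proj1 (mem_rep m)), (proj1 (mem_rep m')). apply equiv_eq_class; auto.
Qed.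

Lemma hom_eq_class (D : dspace) S (a b : pt D) (f f' : Hom S a b) g g' :
  mem f g -> mem f' g' -> equivS D S g g' -> f = f'.
Proof. intros m m' E. apply Hom_eq. eapply class_ext; eauto. Qed.

Definition oxx (D : dspace) (S : pt D -> Prop) (x : pt D) (hx : S x) : Ob S S := exist _ x (conj hx hx).
Arguments oxx {D S} x hx.
Lemma ov_oxx (D : dspace) (S : pt D -> Prop) x hx : ov (@oxx D S x hx) = x.
Proof. reflexivity. Qed.
Lemma oxx_pi (D : dspace) (S : pt D -> Prop) x hx hx' : @oxx D S x hx = oxx x hx'.
Proof. apply Ob_eq. reflexivity. Qed.
Theorem mainTheorem10
  (D : dspace) (X1 X2 : pt D -> Prop)
  (* van Kampen setup *)
  (hcov : forall x, Int X1 x \/ Int X2 x)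
  (hgen : GeneratedBy D X1 X2)
  (A0 A1 A2 B0 B1 B2 : pt D -> Prop)
  (hAB0 : forall x, A0 x -> B0 x) (hAB1 : forall x, A1 x -> B1 x) (hAB2 : forall x, A2 x -> B2 x)
  (hBX0 : forall x, B0 x -> inter X1 X2 x) (hBX1 : forall x, B1 x -> X1 x)
  (hBX2 : forall x, B2 x -> X2 x)
  (hA0 : forall x, A0 x <-> A1 x /\ A2 x) (hB0 : forall x, B0 x <-> B1 x /\ B2 x)
  (hAint : forall x, union A1 A2 x -> IntRel (union A1 A2) A1 x \/ IntRel (union A1 A2) A2 x)
  (hBint : forall x, union B1 B2 x -> IntRel (union B1 B2) B1 x \/ IntRel (union B1 B2) B2 x)
  (* inclusion-induced functors *)
  (i1 : functor (inter X1 X2) B0 X1 B1) (i2 : functor (inter X1 X2) B0 X2 B2)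
  (j1 : functor X1 B1 Tt (union B1 B2)) (j2 : functor X2 B2 Tt (union B1 B2))
  (i1' : functor (inter X1 X2) A0 X1 A1) (i2' : functor (inter X1 X2) A0 X2 A2)
  (j1' : functor X1 A1 Tt (union A1 A2)) (j2' : functor X2 A2 Tt (union A1 A2))
  (hi1 : IsIncl i1) (hi2 : IsIncl i2) (hj1 : IsIncl j1) (hj2 : IsIncl j2)
  (hi1' : IsIncl i1') (hi2' : IsIncl i2') (hj1' : IsIncl j1') (hj2' : IsIncl j2')
  (* compatible future retracts Q_k : pi1(X_k) -> pi1(X_k, B_k) *)
  (e1 : functor (inter X1 X2) (inter X1 X2) X1 X1)
  (e2 : functor (inter X1 X2) (inter X1 X2) X2 X2)
  (he1 : IsIncl e1) (he2 : IsIncl e2)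
  (Q0 : functor (inter X1 X2) (inter X1 X2) (inter X1 X2) B0)
  (Q1 : functor X1 X1 X1 B1) (Q2 : functor X2 X2 X2 B2)
  (kQ0 : functor (inter X1 X2) B0 (inter X1 X2) (inter X1 X2))
  (kQ1 : functor X1 B1 X1 X1) (kQ2 : functor X2 B2 X2 X2)
  (th0 : forall c, Hom (inter X1 X2) (ov c) (ov (fo kQ0 (fo Q0 c))))
  (th1 : forall c, Hom X1 (ov c) (ov (fo kQ1 (fo Q1 c))))
  (th2 : forall c, Hom X2 (ov c) (ov (fo kQ2 (fo Q2 c))))
  (ta0 : forall d, Hom (inter X1 X2) (ov (fo Q0 (fo kQ0 d))) (ov d))
  (ta1 : forall d, Hom X1 (ov (fo Q1 (fo kQ1 d))) (ov d))
  (ta2 : forall d, Hom X2 (ov (fo Q2 (fo kQ2 d))) (ov d))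
  (hQ0 : FutureRetract Q0 kQ0 th0 ta0) (hQ1 : FutureRetract Q1 kQ1 th1 ta1)
  (hQ2 : FutureRetract Q2 kQ2 th2 ta2)
  (hQc1 : FunEqC e1 Q1 Q0 i1) (hQc2 : FunEqC e2 Q2 Q0 i2)
  (hthc1 : forall x, proj1_sig (fm e1 (th0 x)) = proj1_sig (th1 (fo e1 x)))
  (hthc2 : forall x, proj1_sig (fm e2 (th0 x)) = proj1_sig (th2 (fo e2 x)))
  (* compatible future retracts P_k : pi1(X_k, B_k) -> pi1(X_k, A_k) *)
  (P0 : functor (inter X1 X2) B0 (inter X1 X2) A0)
  (P1 : functor X1 B1 X1 A1) (P2 : functor X2 B2 X2 A2)
  (k0 : functor (inter X1 X2) A0 (inter X1 X2) B0)
  (k1 : functor X1 A1 X1 B1) (k2 : functor X2 A2 X2 B2)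
  (eta0 : forall c, Hom (inter X1 X2) (ov c) (ov (fo k0 (fo P0 c))))
  (eta1 : forall c, Hom X1 (ov c) (ov (fo k1 (fo P1 c))))
  (eta2 : forall c, Hom X2 (ov c) (ov (fo k2 (fo P2 c))))
  (eps0 : forall d, Hom (inter X1 X2) (ov (fo P0 (fo k0 d))) (ov d))
  (eps1 : forall d, Hom X1 (ov (fo P1 (fo k1 d))) (ov d))
  (eps2 : forall d, Hom X2 (ov (fo P2 (fo k2 d))) (ov d))
  (hP0 : FutureRetract P0 k0 eta0 eps0) (hP1 : FutureRetract P1 k1 eta1 eps1)
  (hP2 : FutureRetract P2 k2 eta2 eps2)
  (hPc1 : FunEqC i1 P1 P0 i1') (hPc2 : FunEqC i2 P2 P0 i2')
  (hetac1 : forall x, proj1_sig (fm i1 (eta0 x)) = proj1_sig (eta1 (fo i1 x)))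
  (hetac2 : forall x, proj1_sig (fm i2 (eta0 x)) = proj1_sig (eta2 (fo i2 x)))
  (* the inclusion iota and the functor P with P j_k = j'_k P_k *)
  (iota : functor Tt (union A1 A2) Tt (union B1 B2)) (hiota : IsIncl iota)
  (P : functor Tt (union B1 B2) Tt (union A1 A2))
  (hPj1 : FunEqC j1 P P1 j1') (hPj2 : FunEqC j2 P P2 j2') :
  exists (eta : forall c, Hom Tt (ov c) (ov (fo iota (fo P c))))
         (eps : forall d, Hom Tt (ov (fo P (fo iota d))) (ov d)),
    Adjunction P iota eta eps /\
    (forall (x : Ob Tt (union B1 B2)) (y : Ob X1 B1), ov y = ov x ->
        proj1_sig (eta x) = proj1_sig (fm j1 (eta1 y))) /\
    (forall (x : Ob Tt (union B1 B2)) (y : Ob X2 B2), ov y = ov x ->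
        proj1_sig (eta x) = proj1_sig (fm j2 (eta2 y))) /\
    (forall d, proj1_sig (eps d) = proj1_sig (idm (ovS d))) /\
    FutureRetract P iota eta eps.
Proof.
  destruct hP1 as [hk1 [adj1 ret1]]. destruct hP2 as [hk2 [adj2 ret2]].
  destruct hQ1 as [hkQ1 [aQ1 rQ1]]. destruct hQ2 as [hkQ2 [aQ2 rQ2]].
  assert (P1fix : forall y : Ob X1 B1, A1 (ov y) -> ov (fo P1 y) = ov y).
  { intros y hy. pose proof (ret1 y hy) as E. rewrite idm_class in E.
    destruct (idclass_pts E) as [_ e]. rewrite (proj1 hk1) in e. auto. }
  assert (P2fix : forall y : Ob X2 B2, A2 (ov y) -> ov (fo P2 y) = ov y).
  { intros y hy. pose proof (ret2 y hy) as E. rewrite idm_class in E.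
    destruct (idclass_pts E) as [_ e]. rewrite (proj1 hk2) in e. auto. }
  assert (eps1id : forall d : Ob X1 A1, forall r, mem (eps1 d) r -> equivS D X1 r (fun _ => ov d)).
  { intros d r mr. destruct (adj1) as [_ [_ [_ t4]]]. specialize (t4 d).
    assert (hA : A1 (ov (fo k1 d))) by (rewrite (proj1 hk1); exact (proj2 (proj2_sig d))).
    pose proof (ret1 _ hA) as E. rewrite idm_class in E.
    pose proof (idclass_mem E) as me. destruct (idclass_pts E) as [_ ee].
    pose proof (incl_mem hk1 mr) as mr'.
    pose proof (mem_comp me mr') as mc. rewrite t4 in mc. unfold mem in mc; rewrite idm_class in mc.
    destruct (mem_rep mr) as [_ [dr [r0 r1]]].
    assert (ee' : ov (fo P1 (fo k1 d)) = ov (fo k1 d)) by (rewrite <- ee, (proj1 hk1); auto).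
    rewrite (proj1 hk1) in ee'. rewrite (proj1 hk1) in mc.
    eapply equiv_trans. apply equiv_sym. apply (@equiv_lunit D X1 r dr).
    replace (r I0) with (ov d) by congruence. apply equiv_sym; auto. }
  assert (eps2id : forall d : Ob X2 A2, forall r, mem (eps2 d) r -> equivS D X2 r (fun _ => ov d)).
  { intros d r mr. destruct (adj2) as [_ [_ [_ t4]]]. specialize (t4 d).
    assert (hA : A2 (ov (fo k2 d))) by (rewrite (proj1 hk2); exact (proj2 (proj2_sig d))).
    pose proof (ret2 _ hA) as E. rewrite idm_class in E.
    pose proof (idclass_mem E) as me. destruct (idclass_pts E) as [_ ee].
    pose proof (incl_mem hk2 mr) as mr'.
    pose proof (mem_comp me mr') as mc. rewrite t4 in mc. unfold mem in mc; rewrite idm_class in mc.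
    destruct (mem_rep mr) as [_ [dr [r0 r1]]].
    assert (ee' : ov (fo P2 (fo k2 d)) = ov (fo k2 d)) by (rewrite <- ee, (proj1 hk2); auto).
    rewrite (proj1 hk2) in ee'. rewrite (proj1 hk2) in mc.
    eapply equiv_trans. apply equiv_sym. apply (@equiv_lunit D X2 r dr).
    replace (r I0) with (ov d) by congruence. apply equiv_sym; auto. }
  assert (pe : forall d : Ob Tt (union A1 A2), ov (fo P (fo iota d)) = ov d).
  { intros d. destruct (proj2 (proj2_sig d)) as [h|h].
    - set (y := exist (fun x => X1 x /\ B1 x) (ov d) (conj (hBX1 _ (hAB1 _ h)) (hAB1 _ h)) : Ob X1 B1).
      assert (E : fo iota d = fo j1 y) by (apply Ob_eq; rewrite (proj1 hiota), (proj1 hj1); auto).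
      rewrite E, (proj1 hPj1), (proj1 hj1'). apply P1fix. exact h.
    - set (y := exist (fun x => X2 x /\ B2 x) (ov d) (conj (hBX2 _ (hAB2 _ h)) (hAB2 _ h)) : Ob X2 B2).
      assert (E : fo iota d = fo j2 y) by (apply Ob_eq; rewrite (proj1 hiota), (proj1 hj2); auto).
      rewrite E, (proj1 hPj2), (proj1 hj2'). apply P2fix. exact h. }
  set (src := fun (c : Ob Tt (union B1 B2)) (r0 : I -> pt D) =>
     (exists y : Ob X1 B1, ov y = ov c /\ mem (eta1 y) r0) \/ (exists y : Ob X2 B2, ov y = ov c /\ mem (eta2 y) r0)).
  assert (cross12 : forall (y1 : Ob X1 B1) (y2 : Ob X2 B2) r1 r2, ov y1 = ov y2 ->
     mem (eta1 y1) r1 -> mem (eta2 y2) r2 -> equivS D Tt r1 r2).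
  { intros y1 y2 r1 r2 e m1 m2.
    assert (hb : B0 (ov y1)). { apply hB0. split. exact (proj2 (proj2_sig y1)). rewrite e; exact (proj2 (proj2_sig y2)). }
    set (z := exist (fun x => inter X1 X2 x /\ B0 x) (ov y1) (conj (hBX0 _ hb) hb) : Ob (inter X1 X2) B0).
    destruct (mem_ex (eta0 z)) as [q mq].
    assert (E1 : fo i1 z = y1) by (apply Ob_eq; rewrite (proj1 hi1); auto).
    assert (E2 : fo i2 z = y2) by (apply Ob_eq; rewrite (proj1 hi2); auto).
    pose proof (incl_mem hi1 mq) as q1. unfold mem in q1. rewrite hetac1, E1 in q1.
    pose proof (incl_mem hi2 mq) as q2. unfold mem in q2. rewrite hetac2, E2 in q2.
    eapply equiv_trans. exact (equiv_Tt (mem_equiv m1 q1)).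
    exact (equiv_Tt (mem_equiv q2 m2)). }
  assert (WD : forall c r0 r0', src c r0 -> src c r0' -> equivS D Tt r0 r0').
  { intros c r0 r0' [[y [ey my]]|[y [ey my]]] [[y' [ey' my']]|[y' [ey' my']]].
    - assert (y = y') by (apply Ob_eq; congruence). subst y'. exact (equiv_Tt (mem_equiv my my')).
    - apply (cross12 y y'); auto; congruence.
    - apply equiv_sym. apply (cross12 y' y); auto; congruence.
    - assert (y = y') by (apply Ob_eq; congruence). subst y'. exact (equiv_Tt (mem_equiv my my')). }
  set (Ceta := fun (c : Ob Tt (union B1 B2)) (r : I -> pt D) => exists r0, src c r0 /\ equivS D Tt r0 r).
  assert (etaP : forall c, exists g, dpathS Tt g /\ g I0 = ov c /\ g I1 = ov (fo iota (fo P c)) /\ Ceta c = equivS D Tt g).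
  { intros c. assert (hs : exists r0, src c r0 /\ dpathS Tt r0 /\ r0 I0 = ov c /\ r0 I1 = ov (fo P c)).
    { destruct (proj2 (proj2_sig c)) as [h|h].
      - set (y := exist (fun x => X1 x /\ B1 x) (ov c) (conj (hBX1 _ h) h) : Ob X1 B1).
        destruct (mem_ex (eta1 y)) as [r0 m0]. exists r0. split. left; exists y; auto.
        destruct (mem_rep m0) as [_ [dr [q0 q1]]]. split. apply (dpathS_Tt dr). split. auto.
        rewrite q1, (proj1 hk1). assert (E : c = fo j1 y) by (apply Ob_eq; rewrite (proj1 hj1); auto).
        rewrite E, (proj1 hPj1), (proj1 hj1'). auto.
      - set (y := exist (fun x => X2 x /\ B2 x) (ov c) (conj (hBX2 _ h) h) : Ob X2 B2).
        destruct (mem_ex (eta2 y)) as [r0 m0]. exists r0. split. right; exists y; auto.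
        destruct (mem_rep m0) as [_ [dr [q0 q1]]]. split. apply (dpathS_Tt dr). split. auto.
        rewrite q1, (proj1 hk2). assert (E : c = fo j2 y) by (apply Ob_eq; rewrite (proj1 hj2); auto).
        rewrite E, (proj1 hPj2), (proj1 hj2'). auto. }
    destruct hs as [r0 [s0 [d0 [q0 q1]]]]. exists r0. split; auto. split; auto. split.
    rewrite (proj1 hiota); auto.
    apply functional_extensionality; intro r. apply propositional_extensionality. split.
    - intros [r1 [s1 E]]. eapply equiv_trans; [|exact E]. apply WD with c; auto.
    - intros E. exists r0; auto. }
  set (eta := fun c => exist _ (Ceta c) (etaP c) : Hom Tt (ov c) (ov (fo iota (fo P c)))).
  set (eps := fun d => @hom_of_eq D Tt (ov (fo P (fo iota d))) (ov d) Logic.I (pe d)).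
  assert (mem_eta1 : forall c (y : Ob X1 B1) r, ov y = ov c -> mem (eta1 y) r -> mem (eta c) r).
  { intros c y r e m. exists r. split. left; exists y; auto. apply equiv_refl. }
  assert (mem_eta2 : forall c (y : Ob X2 B2) r, ov y = ov c -> mem (eta2 y) r -> mem (eta c) r).
  { intros c y r e m. exists r. split. right; exists y; auto. apply equiv_refl. }
  assert (epscls : forall d, proj1_sig (eps d) = equivS D Tt (fun _ => ov d)) by reflexivity.
  assert (etaA : forall c, union A1 A2 (ov c) -> mem (eta c) (fun _ => ov c)).
  { intros c [h|h].
    - set (y := exist (fun x => X1 x /\ B1 x) (ov c) (conj (hBX1 _ (hAB1 _ h)) (hAB1 _ h)) : Ob X1 B1).
      apply (mem_eta1 c y); auto. apply idclass_mem. rewrite (ret1 y h). reflexivity.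
    - set (y := exist (fun x => X2 x /\ B2 x) (ov c) (conj (hBX2 _ (hAB2 _ h)) (hAB2 _ h)) : Ob X2 B2).
      apply (mem_eta2 c y); auto. apply idclass_mem. rewrite (ret2 y h). reflexivity. }
  assert (NAT : forall a b f, Gen j1 j2 a b f -> comp f (eta b) = comp (eta a) (fm iota (fm P f))).
  { intros a b f G. induction G.
    - destruct (mem_ex h) as [rh mh]. destruct (mem_ex (eta1 y')) as [re' me'].
      destruct (mem_ex (eta1 y)) as [re me]. destruct (mem_ex (fm P1 h)) as [rp mp].
      apply hom_eq_class with (concat rh re') (concat re rp).
      + apply mem_comp. apply (incl_mem hj1 mh). apply (mem_eta1 _ y'); auto. rewrite (proj1 hj1); auto.
      + apply mem_comp. apply (mem_eta1 _ y); auto. rewrite (proj1 hj1); auto.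
        apply (incl_mem hiota). unfold mem. rewrite (proj2 hPj1). apply (incl_mem hj1' mp).
      + apply (@equiv_Tt D X1). destruct adj1 as [n1 _]. specialize (n1 y y' h).
        pose proof (mem_comp mh me') as c1. pose proof (mem_comp me (incl_mem hk1 mp)) as c2.
        rewrite n1 in c1. exact (mem_equiv c1 c2).
    - destruct (mem_ex h) as [rh mh]. destruct (mem_ex (eta2 y')) as [re' me'].
      destruct (mem_ex (eta2 y)) as [re me]. destruct (mem_ex (fm P2 h)) as [rp mp].
      apply hom_eq_class with (concat rh re') (concat re rp).
      + apply mem_comp. apply (incl_mem hj2 mh). apply (mem_eta2 _ y'); auto. rewrite (proj1 hj2); auto.
      + apply mem_comp. apply (mem_eta2 _ y); auto. rewrite (proj1 hj2); auto.
        apply (incl_mem hiota). unfold mem. rewrite (proj2 hPj2). apply (incl_mem hj2' mp).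
      + apply (@equiv_Tt D X2). destruct adj2 as [n1 _]. specialize (n1 y y' h).
        pose proof (mem_comp mh me') as c1. pose proof (mem_comp me (incl_mem hk2 mp)) as c2.
        rewrite n1 in c1. exact (mem_equiv c1 c2).
    - rewrite comp_assoc, IHG2, <- comp_assoc, IHG1, comp_assoc.
      rewrite (fm_comp P), (fm_comp iota). auto. }
  pose (Th1 := fun x q t => exists hx : X1 x, q = ov (fo Q1 (oxx x hx)) /\ mem (th1 (oxx x hx)) t).
  pose (Th2 := fun x q t => exists hx : X2 x, q = ov (fo Q2 (oxx x hx)) /\ mem (th2 (oxx x hx)) t).
  assert (Th1p : forall x q t, Th1 x q t -> dpathS Tt t /\ t I0 = x /\ t I1 = q).
  { intros x q t [hx [eq mt]]. destruct (mem_rep mt) as [_ [dt [t0 t1]]].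
    split. exact (dpathS_Tt dt). split. auto. rewrite t1, (proj1 hkQ1). auto. }
  assert (Th2p : forall x q t, Th2 x q t -> dpathS Tt t /\ t I0 = x /\ t I1 = q).
  { intros x q t [hx [eq mt]]. destruct (mem_rep mt) as [_ [dt [t0 t1]]].
    split. exact (dpathS_Tt dt). split. auto. rewrite t1, (proj1 hkQ2). auto. }
  assert (Th0 : forall x (h1 : X1 x) (h2 : X2 x), exists w,
     ov (fo Q1 (oxx x h1)) = ov (fo Q2 (oxx x h2)) /\ mem (th1 (oxx x h1)) w /\ mem (th2 (oxx x h2)) w).
  { intros x h1 h2. assert (h0 : inter X1 X2 x) by (split; auto).
    set (z := oxx x h0). destruct (mem_ex (th0 z)) as [w mw].
    assert (E1 : fo e1 z = oxx x h1) by (apply Ob_eq; rewrite (proj1 he1); auto).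
    assert (E2 : fo e2 z = oxx x h2) by (apply Ob_eq; rewrite (proj1 he2); auto).
    exists w. split; [|split].
    - rewrite <- E1, <- E2, (proj1 hQc1), (proj1 hQc2), (proj1 hi1), (proj1 hi2). auto.
    - pose proof (incl_mem he1 mw) as q1. unfold mem in q1. rewrite hthc1, E1 in q1. exact q1.
    - pose proof (incl_mem he2 mw) as q2. unfold mem in q2. rewrite hthc2, E2 in q2. exact q2. }
  assert (Th21 : forall x q t, X1 x -> Th2 x q t -> exists t', Th1 x q t' /\ equivS D Tt t t').
  { intros x q t h1 [h2 [eq mt]]. destruct (Th0 x h1 h2) as [w [ew [m1 m2]]].
    exists w. split. exists h1. split; auto. congruence. exact (equiv_Tt (mem_equiv mt m2)). }
  assert (Th12 : forall x q t, X2 x -> Th1 x q t -> exists t', Th2 x q t' /\ equivS D Tt t t').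
  { intros x q t h2 [h1 [eq mt]]. destruct (Th0 x h1 h2) as [w [ew [m1 m2]]].
    exists w. split. exists h2. split; auto. congruence. exact (equiv_Tt (mem_equiv mt m1)). }
  assert (ThB1 : forall x (hx : X1 x) t, B1 x -> mem (th1 (oxx x hx)) t ->
     ov (fo Q1 (oxx x hx)) = x /\ equivS D Tt t (fun _ => x)).
  { intros x hx t hb mt. pose proof (rQ1 (oxx x hx) hb) as E. rewrite idm_class in E.
    destruct (idclass_pts E) as [_ ee]. rewrite (proj1 hkQ1) in ee. split. auto.
    exact (equiv_Tt (mem_equiv mt (idclass_mem E))). }
  assert (ThB2 : forall x (hx : X2 x) t, B2 x -> mem (th2 (oxx x hx)) t ->
     ov (fo Q2 (oxx x hx)) = x /\ equivS D Tt t (fun _ => x)).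
  { intros x hx t hb mt. pose proof (rQ2 (oxx x hx) hb) as E. rewrite idm_class in E.
    destruct (idclass_pts E) as [_ ee]. rewrite (proj1 hkQ2) in ee. split. auto.
    exact (equiv_Tt (mem_equiv mt (idclass_mem E))). }
  assert (Base1 : forall g, dpathS X1 g -> forall q q' t t' (a b : Ob Tt (union B1 B2)),
     Th1 (g I0) q t -> Th1 (g I1) q' t' -> ov a = q -> ov b = q' ->
     exists f : Hom Tt (ov a) (ov b), Gen j1 j2 a b f /\
       forall r, mem f r -> equivS D Tt (concat g t') (concat t r)).
  { intros g hg q q' t t' a b [hx [eq mt]] [hx' [eq' mt']] ea eb.
    pose (h := mkHom hg : Hom X1 (ov (oxx (g I0) hx)) (ov (oxx (g I1) hx'))).
    assert (Ea : a = fo j1 (fo Q1 (oxx (g I0) hx))) by (apply Ob_eq; rewrite (proj1 hj1); congruence).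
    assert (Eb : b = fo j1 (fo Q1 (oxx (g I1) hx'))) by (apply Ob_eq; rewrite (proj1 hj1); congruence).
    subst a b. exists (fm j1 (fm Q1 h)). split. apply gen1.
    intros r mr. destruct (mem_ex (fm Q1 h)) as [rp mp].
    destruct aQ1 as [nQ _]. specialize (nQ _ _ h).
    pose proof (mem_comp (mem_mkHom hg : mem h g) mt') as c1.
    pose proof (mem_comp mt (incl_mem hkQ1 mp)) as c2. rewrite nQ in c1.
    eapply equiv_trans. exact (equiv_Tt (mem_equiv c1 c2)).
    destruct (mem_rep mt) as [_ [dt [t0 t1]]]. destruct (mem_rep mp) as [_ [dp [p0 p1]]].
    apply equiv_concat_r. exact (equiv_Tt (mem_equiv (incl_mem hj1 mp) mr)).
    exact (dpathS_Tt dt). rewrite t1, p0, (proj1 hkQ1). auto. }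
  assert (Base2 : forall g, dpathS X2 g -> forall q q' t t' (a b : Ob Tt (union B1 B2)),
     Th2 (g I0) q t -> Th2 (g I1) q' t' -> ov a = q -> ov b = q' ->
     exists f : Hom Tt (ov a) (ov b), Gen j1 j2 a b f /\
       forall r, mem f r -> equivS D Tt (concat g t') (concat t r)).
  { intros g hg q q' t t' a b [hx [eq mt]] [hx' [eq' mt']] ea eb.
    pose (h := mkHom hg : Hom X2 (ov (oxx (g I0) hx)) (ov (oxx (g I1) hx'))).
    assert (Ea : a = fo j2 (fo Q2 (oxx (g I0) hx))) by (apply Ob_eq; rewrite (proj1 hj2); congruence).
    assert (Eb : b = fo j2 (fo Q2 (oxx (g I1) hx'))) by (apply Ob_eq; rewrite (proj1 hj2); congruence).
    subst a b. exists (fm j2 (fm Q2 h)). split. apply gen2.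
    intros r mr. destruct (mem_ex (fm Q2 h)) as [rp mp].
    destruct aQ2 as [nQ _]. specialize (nQ _ _ h).
    pose proof (mem_comp (mem_mkHom hg : mem h g) mt') as c1.
    pose proof (mem_comp mt (incl_mem hkQ2 mp)) as c2. rewrite nQ in c1.
    eapply equiv_trans. exact (equiv_Tt (mem_equiv c1 c2)).
    destruct (mem_rep mt) as [_ [dt [t0 t1]]]. destruct (mem_rep mp) as [_ [dp [p0 p1]]].
    apply equiv_concat_r. exact (equiv_Tt (mem_equiv (incl_mem hj2 mp) mr)).
    exact (dpathS_Tt dt). rewrite t1, p0, (proj1 hkQ2). auto. }
  assert (conv1 : forall x q t, X1 x -> (Th1 x q t \/ Th2 x q t) -> exists t1, Th1 x q t1 /\ equivS D Tt t t1).
  { intros x q t hx [h|h]. exists t; split; auto; apply equiv_refl. apply Th21; auto. }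
  assert (conv2 : forall x q t, X2 x -> (Th1 x q t \/ Th2 x q t) -> exists t1, Th2 x q t1 /\ equivS D Tt t t1).
  { intros x q t hx [h|h]. apply Th12; auto. exists t; split; auto; apply equiv_refl. }
  assert (Thp : forall x q t, (Th1 x q t \/ Th2 x q t) -> dpathS Tt t /\ t I0 = x /\ t I1 = q).
  { intros x q t [h|h]; [apply Th1p|apply Th2p]; auto. }
  assert (BaseA : forall g, (dpathS X1 g \/ dpathS X2 g) -> forall q q' t t' (a b : Ob Tt (union B1 B2)),
     (Th1 (g I0) q t \/ Th2 (g I0) q t) -> (Th1 (g I1) q' t' \/ Th2 (g I1) q' t') -> ov a = q -> ov b = q' ->
     exists f : Hom Tt (ov a) (ov b), Gen j1 j2 a b f /\
       forall r, mem f r -> equivS D Tt (concat g t') (concat t r)).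
  { intros g hg q q' t t' a b h0 h1 ea eb.
    destruct (Thp _ _ _ h0) as [dt [t0 tq]]. destruct (Thp _ _ _ h1) as [dt' [t0' tq']].
    assert (fin : forall t1 t1', equivS D Tt t t1 -> equivS D Tt t' t1' ->
       (exists f : Hom Tt (ov a) (ov b), Gen j1 j2 a b f /\
         forall r, mem f r -> equivS D Tt (concat g t1') (concat t1 r)) ->
       exists f : Hom Tt (ov a) (ov b), Gen j1 j2 a b f /\
         forall r, mem f r -> equivS D Tt (concat g t') (concat t r)).
    { intros t1 t1' E E' [f [G H]]. exists f. split; auto. intros r mr.
      destruct (mem_rep mr) as [_ [dr [r0 r1]]].
      assert (dg : dpathS Tt g) by (destruct hg as [hg|hg]; exact (dpathS_Tt hg)).
      destruct (equiv_ends E) as [_ ee1].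
      eapply equiv_trans. apply equiv_concat_r. exact E'. auto. congruence.
      eapply equiv_trans. exact (H r mr). apply equiv_concat_l. apply equiv_sym; auto. auto. congruence. }
    destruct hg as [hg|hg].
    - destruct (conv1 _ _ _ (proj2 hg I0) h0) as [t1 [kk0 E]].
      destruct (conv1 _ _ _ (proj2 hg I1) h1) as [t1' [kk1 E']].
      apply (fin t1 t1' E E'). apply (Base1 g hg q q' t1 t1' a b); auto.
    - destruct (conv2 _ _ _ (proj2 hg I0) h0) as [t1 [kk0 E]].
      destruct (conv2 _ _ _ (proj2 hg I1) h1) as [t1' [kk1 E']].
      apply (fin t1 t1' E E'). apply (Base2 g hg q q' t1 t1' a b); auto. }
  assert (Claim : forall n g ts, Dec D X1 X2 n ts g -> forall q q' t t' (a b : Ob Tt (union B1 B2)),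
     (Th1 (g I0) q t \/ Th2 (g I0) q t) -> (Th1 (g I1) q' t' \/ Th2 (g I1) q' t') -> ov a = q -> ov b = q' ->
     exists f : Hom Tt (ov a) (ov b), Gen j1 j2 a b f /\
       forall r, mem f r -> equivS D Tt (concat g t') (concat t r)).
  { induction n as [|n IH]; intros g ts hd q q' t t' a b h0 h1 ea eb.
    - destruct hd as [z [o _]]. lra.
    - destruct n as [|m].
      + destruct hd as [z [o hp]]. destruct (hp 0%nat ltac:(lia)) as [_ hs].
        rewrite z, o, piece01 in hs. exact (BaseA g hs q q' t t' a b h0 h1 ea eb).
      + pose proof (Dec_lt hd) as hl. pose proof hd as hd'. destruct hd' as [z [o hp]].
        assert (ht1 : 0 < ts 1%nat < 1).
        { split. rewrite <- z. apply hl; lia. rewrite <- o. apply hl; lia. }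
        destruct (hp 0%nat ltac:(lia)) as [_ hs]. rewrite z in hs.
        pose proof (Dec_shift hd) as hd2.
        assert (dg : dpathS Tt g).
        { split. apply (proj2 (hgen g)). exists (S (S m)), ts. exact hd. intros; exact Logic.I. }
        set (t1 := ts 1%nat) in *.
        assert (ga0 : (piece g 0 t1) I0 = g I0) by (rewrite piece_I0, mkI0 by lra; auto).
        assert (ga1 : (piece g 0 t1) I1 = g (mkI t1)) by (rewrite piece_I1; auto).
        assert (rho0 : (piece g t1 1) I0 = g (mkI t1)) by (rewrite piece_I0 by lra; auto).
        assert (rho1 : (piece g t1 1) I1 = g I1) by (rewrite piece_I1, mkI1; auto).
        assert (dga : dpathS Tt (piece g 0 t1)) by (apply piece_dpathS; auto; lra).
        assert (drho : dpathS Tt (piece g t1 1)) by (apply piece_dpathS; auto; lra).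
        set (y := g (mkI t1)) in *.
        assert (stepc : forall ty qy (byy : Ob Tt (union B1 B2)), (Th1 y qy ty \/ Th2 y qy ty) -> ov byy = qy ->
          exists f : Hom Tt (ov a) (ov b), Gen j1 j2 a b f /\
            forall r, mem f r -> equivS D Tt (concat g t') (concat t r)).
        { intros ty qy byy hty eby.
          destruct (BaseA (piece g 0 t1) hs q qy t ty a byy) as [f1 [G1 H1]]; auto. rewrite ga0; auto. rewrite ga1; auto.
          destruct (IH (piece g t1 1) _ hd2 qy q' ty t' byy b) as [f2 [G2 H2]]; auto. rewrite rho0; auto. rewrite rho1; auto.
          exists (comp f1 f2). split. eapply genc; eauto.
          intros r mr. destruct (mem_ex f1) as [r1 m1]. destruct (mem_ex f2) as [r2 m2].
          destruct (Thp _ _ _ h0) as [dt [t0 tq]]. destruct (Thp _ _ _ h1) as [dt' [t0' tq']].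
          destruct (Thp _ _ _ hty) as [dty [ty0 tyq]].
          destruct (mem_rep m1) as [_ [dr1 [r10 r11]]]. destruct (mem_rep m2) as [_ [dr2 [r20 r21]]].
          pose proof (H1 r1 m1) as E5. pose proof (H2 r2 m2) as E3.
          eapply equiv_trans. apply equiv_concat_l; [apply equiv_split with (a := t1); [auto|lra]|auto|congruence].
          eapply equiv_trans. apply equiv_assoc; auto. congruence. congruence.
          eapply equiv_trans. apply equiv_concat_r. exact E3. auto. rewrite concat_I0. congruence.
          eapply equiv_trans. apply equiv_sym. apply equiv_assoc; auto. congruence. congruence.
          eapply equiv_trans. apply equiv_concat_l. exact E5. auto. rewrite concat_I1. congruence.
          eapply equiv_trans. apply equiv_assoc; auto. congruence. congruence.
          apply equiv_concat_r. apply equiv_sym. exact (mem_equiv mr (mem_comp m1 m2)). auto.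
          rewrite concat_I0. congruence. }
        destruct hs as [hs|hs].
        * assert (hy : X1 y) by (rewrite <- ga1; apply (proj2 hs)).
          destruct (mem_ex (th1 (oxx y hy))) as [ty mty].
          apply (stepc ty (ov (fo Q1 (oxx y hy))) (fo j1 (fo Q1 (oxx y hy)))).
          left. exists hy. auto. apply (proj1 hj1).
        * assert (hy : X2 y) by (rewrite <- ga1; apply (proj2 hs)).
          destruct (mem_ex (th2 (oxx y hy))) as [ty mty].
          apply (stepc ty (ov (fo Q2 (oxx y hy))) (fo j2 (fo Q2 (oxx y hy)))).
          right. exists hy. auto. apply (proj1 hj2). }
  assert (GEN : forall a b (f : Hom Tt (ov a) (ov b)), Gen j1 j2 a b f).
  { intros a b f. destruct (mem_ex f) as [g mg]. destruct (mem_rep mg) as [_ [dg [g0 g1]]].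
    destruct (proj1 (hgen g) (proj1 dg)) as [n [ts hd]].
    assert (TT : forall c : Ob Tt (union B1 B2), exists t, (Th1 (ov c) (ov c) t \/ Th2 (ov c) (ov c) t) /\
                 equivS D Tt t (fun _ => ov c)).
    { intros c. destruct (proj2 (proj2_sig c)) as [h|h].
      - destruct (mem_ex (th1 (oxx (ov c) (hBX1 _ h)))) as [t mt]. destruct (ThB1 _ _ _ h mt) as [e E].
        exists t. split; auto. left. exists (hBX1 _ h). split; auto.
      - destruct (mem_ex (th2 (oxx (ov c) (hBX2 _ h)))) as [t mt]. destruct (ThB2 _ _ _ h mt) as [e E].
        exists t. split; auto. right. exists (hBX2 _ h). split; auto. }
    destruct (TT a) as [t [ht Et]]. destruct (TT b) as [t' [ht' Et']].
    destruct (Claim n g ts hd (ov a) (ov b) t t' a b) as [f' [G H]]; try rewrite g0; try rewrite g1; auto.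
    destruct (mem_ex f') as [r mr]. destruct (mem_rep mr) as [_ [dr [r0 r1]]].
    destruct (Thp _ _ _ ht) as [dt [t0 tq]]. destruct (Thp _ _ _ ht') as [dt' [t0' tq']].
    assert (E : equivS D Tt g r).
    { pose proof (@equiv_runit D Tt g dg) as R. rewrite g1 in R.
      pose proof (@equiv_lunit D Tt r dr) as L. rewrite r0 in L.
      eapply equiv_trans. apply equiv_sym. exact R.
      eapply equiv_trans. apply equiv_concat_r. apply equiv_sym. exact Et'. auto. congruence.
      eapply equiv_trans. exact (H r mr).
      eapply equiv_trans. apply equiv_concat_l. exact Et. auto. congruence.
      exact L. }
    replace f with f'. exact G. symmetry. apply (hom_eq_class mg mr E). }
  assert (Pcls : forall a b a' b' (f : Hom Tt (ov a) (ov b)) (f' : Hom Tt (ov a') (ov b')),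
     a = a' -> b = b' -> proj1_sig f = proj1_sig f' -> proj1_sig (fm P f) = proj1_sig (fm P f')).
  { intros a b a' b' f f' ea eb ef. subst a' b'. apply Hom_eq in ef. subst f'. auto. }
  assert (memeps : forall d, mem (eps d) (fun _ => ov d)) by (intros d; unfold mem; rewrite epscls; apply equiv_refl).
  assert (P1id : forall y : Ob X1 B1, forall u, mem (fm P1 (eta1 y)) u -> equivS D Tt u (fun _ => ov (fo P1 y))).
  { intros y u mu. destruct adj1 as [_ [_ [t3 _]]]. specialize (t3 y).
    destruct (mem_ex (eps1 (fo P1 y))) as [v mv].
    pose proof (mem_comp mu mv) as c. rewrite t3 in c. unfold mem in c. rewrite idm_class in c.
    destruct (mem_rep mu) as [_ [du [u0 u1]]]. destruct (mem_rep mv) as [_ [dv [v0 v1]]].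
    pose proof (eps1id _ _ mv) as Ev. assert (u1' : u I1 = ov (fo P1 y)) by (rewrite u1, P1fix, (proj1 hk1); auto; rewrite (proj1 hk1); exact (proj2 (proj2_sig (fo P1 y)))). clear u1. rename u1' into u1.
    apply equiv_Tt with X1. eapply equiv_trans. apply equiv_sym. apply (@equiv_runit D X1 u du).
    eapply equiv_trans. apply equiv_concat_r. rewrite u1. apply equiv_sym. exact Ev. auto. congruence.
    apply equiv_sym. exact c. }
  assert (P2id : forall y : Ob X2 B2, forall u, mem (fm P2 (eta2 y)) u -> equivS D Tt u (fun _ => ov (fo P2 y))).
  { intros y u mu. destruct adj2 as [_ [_ [t3 _]]]. specialize (t3 y).
    destruct (mem_ex (eps2 (fo P2 y))) as [v mv].
    pose proof (mem_comp mu mv) as c. rewrite t3 in c. unfold mem in c. rewrite idm_class in c.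
    destruct (mem_rep mu) as [_ [du [u0 u1]]]. destruct (mem_rep mv) as [_ [dv [v0 v1]]].
    pose proof (eps2id _ _ mv) as Ev. assert (u1' : u I1 = ov (fo P2 y)) by (rewrite u1, P2fix, (proj1 hk2); auto; rewrite (proj1 hk2); exact (proj2 (proj2_sig (fo P2 y)))). clear u1. rename u1' into u1.
    apply equiv_Tt with X2. eapply equiv_trans. apply equiv_sym. apply (@equiv_runit D X2 u du).
    eapply equiv_trans. apply equiv_concat_r. rewrite u1. apply equiv_sym. exact Ev. auto. congruence.
    apply equiv_sym. exact c. }
  assert (ADJ : Adjunction P iota eta eps).
  { split; [|split; [|split]].
    - intros c c' f. apply NAT. apply GEN.
    - intros d d' g. pose proof (NAT _ _ _ (GEN _ _ (fm iota g))) as N.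
      destruct (mem_ex g) as [x mx]. destruct (mem_ex (fm P (fm iota g))) as [w mw].
      destruct (mem_rep mx) as [_ [dx [x0 x1]]]. destruct (mem_rep mw) as [_ [dw [w0 w1]]].
      rewrite pe in w0, w1.
      assert (hd' : union A1 A2 (ov (fo iota d'))) by (rewrite (proj1 hiota); exact (proj2 (proj2_sig d'))).
      pose proof (mem_comp (incl_mem hiota mx) (etaA _ hd')) as c1.
      assert (hd : union A1 A2 (ov (fo iota d))) by (rewrite (proj1 hiota); exact (proj2 (proj2_sig d))).
      pose proof (mem_comp (etaA _ hd) (incl_mem hiota mw)) as c2.
      rewrite N in c1. pose proof (mem_equiv c1 c2) as E. rewrite !(proj1 hiota) in E.
      assert (xw : equivS D Tt x w).
      { eapply equiv_trans. apply equiv_sym. apply (@equiv_runit D Tt x dx). rewrite x1.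
        eapply equiv_trans. exact E. pose proof (@equiv_lunit D Tt w dw) as L. rewrite w0 in L. exact L. }
      apply hom_eq_class with (concat w (fun _ => ov d')) (concat (fun _ => ov d) x).
      + apply mem_comp; auto.
      + apply mem_comp; auto.
      + eapply equiv_trans. pose proof (@equiv_runit D Tt w dw) as R. rewrite w1 in R. exact R.
        apply equiv_sym. eapply equiv_trans. pose proof (@equiv_lunit D Tt x dx) as L. rewrite x0 in L. exact L.
        exact xw.
    - intros c. destruct (mem_ex (fm P (eta c))) as [w mw].
      destruct (mem_rep mw) as [_ [dw [w0 w1]]].
      assert (Ew : equivS D Tt w (fun _ => ov (fo P c))).
      { destruct (proj2 (proj2_sig c)) as [h|h].
        - set (y := exist (fun x => X1 x /\ B1 x) (ov c) (conj (hBX1 _ h) h) : Ob X1 B1).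
          assert (Ec : c = fo j1 y) by (apply Ob_eq; rewrite (proj1 hj1); auto).
          destruct (mem_ex (fm P1 (eta1 y))) as [u mu].
          assert (cl : proj1_sig (fm P (eta c)) = proj1_sig (fm P (fm j1 (eta1 y)))).
          { apply Pcls. auto. apply Ob_eq. rewrite (proj1 hiota), (proj1 hj1), (proj1 hk1), Ec, (proj1 hPj1), (proj1 hj1'). auto.
            destruct (mem_ex (eta1 y)) as [r mr]. apply (class_ext (g:=r) (g':=r)).
            apply (mem_eta1 c y); auto. apply (incl_mem hj1 mr). apply equiv_refl. }
          rewrite (proj2 hPj1) in cl. pose proof (incl_mem hj1' mu) as mu'. unfold mem in mu'. rewrite <- cl in mu'.
          eapply equiv_trans. exact (mem_equiv mw mu'). eapply equiv_trans. apply (P1id y); auto.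
          rewrite Ec, (proj1 hPj1), (proj1 hj1'). apply equiv_refl.
        - set (y := exist (fun x => X2 x /\ B2 x) (ov c) (conj (hBX2 _ h) h) : Ob X2 B2).
          assert (Ec : c = fo j2 y) by (apply Ob_eq; rewrite (proj1 hj2); auto).
          destruct (mem_ex (fm P2 (eta2 y))) as [u mu].
          assert (cl : proj1_sig (fm P (eta c)) = proj1_sig (fm P (fm j2 (eta2 y)))).
          { apply Pcls. auto. apply Ob_eq. rewrite (proj1 hiota), (proj1 hj2), (proj1 hk2), Ec, (proj1 hPj2), (proj1 hj2'). auto.
            destruct (mem_ex (eta2 y)) as [r mr]. apply (class_ext (g:=r) (g':=r)).
            apply (mem_eta2 c y); auto. apply (incl_mem hj2 mr). apply equiv_refl. }
          rewrite (proj2 hPj2) in cl. pose proof (incl_mem hj2' mu) as mu'. unfold mem in mu'. rewrite <- cl in mu'.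
          eapply equiv_trans. exact (mem_equiv mw mu'). eapply equiv_trans. apply (P2id y); auto.
          rewrite Ec, (proj1 hPj2), (proj1 hj2'). apply equiv_refl. }
      apply hom_eq_class with (concat w (fun _ => ov (fo P c))) (fun _ => ov (fo P c)).
      + apply mem_comp; auto.
      + apply mem_idm.
      + pose proof (@equiv_runit D Tt w dw) as R. rewrite w1, pe in R.
        eapply equiv_trans. exact R. exact Ew.
    - intros d. assert (hd : union A1 A2 (ov (fo iota d))) by (rewrite (proj1 hiota); exact (proj2 (proj2_sig d))).
      apply hom_eq_class with (concat (fun _ => ov (fo iota d)) (fun _ => ov d)) (fun _ => ov (fo iota d)).
      + apply mem_comp. apply etaA; auto. apply (incl_mem hiota). apply memeps.
      + apply mem_idm.
      + rewrite (proj1 hiota). apply (@equiv_runit D Tt (fun _ => ov d)). split. apply dpath_const.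
        intros; exact Logic.I. }
  exists eta, eps. split; [exact ADJ|split; [|split; [|split]]].
  - intros x y e. destruct (mem_ex (eta1 y)) as [r mr]. apply (class_ext (g:=r) (g':=r)).
    apply (mem_eta1 x y); auto. apply (incl_mem hj1 mr). apply equiv_refl.
  - intros x y e. destruct (mem_ex (eta2 y)) as [r mr]. apply (class_ext (g:=r) (g':=r)).
    apply (mem_eta2 x y); auto. apply (incl_mem hj2 mr). apply equiv_refl.
  - intros d. reflexivity.
  - split; [exact hiota|split; [exact ADJ|]].
    intros a ha. apply (class_ext (g:=fun _ => ov a) (g':=fun _ => ov a)). apply etaA; auto. apply mem_idm.
    apply equiv_refl.
Qed.
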